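(* Let $\|\cdot\|$ be a strictly convex norm on $\mathbb R^2$ that is $C^1$ on $\mathbb R^2\setminus\{0\}$. Given $\xi=\gamma(\theta_0)\in\partial\mathsf B$, define $\Phi^\xi:\partial\mathsf B\to\mathbb R^2$ by \[\Phi^\xi(z)=\mathbf 1_{z\cdot i\gamma(\theta_0)>0}\,\gamma'(\theta_0)=\mathbf 1_{z\cdot i\xi>0}\,i\,n_{\mathsf B}(\xi).\] Then there exists a uniformly bounded family $\{\Phi^\xi_\delta\}_{\delta>0}\subset\mathrm{ENT}$ such that $\Phi^\xi_\delta(z)\to\Phi^\xi(z)$ as $\delta\to0$ for every $z\in\partial\mathsf B$.
   Context: $\mathsf B=\{\|z\|<1\}$ normalized so that $\partial\mathsf B$ has length $2\pi$; $\gamma$ is the counterclockwise arc-length parametrization of $\partial\mathsf B$; $n_{\mathsf B}(\xi)$ is the outer unit normal to $\partial\mathsf B$ at $\xi$; $\mathbb R^2\cong\mathbb C$, $i$ is rotation by $\pi/2$. $\mathrm{ENT}=\{\Phi\in C^1(\partial\mathsf B;\mathbb R^2):\frac{d}{d\theta}\Phi(\gamma(\theta))=\lambda_\Phi(\theta)\gamma'(\theta)$ for some $\lambda_\Phi\in C^1(\mathbb R/2\pi\mathbb Z)\}$. *)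

(* Defs.v *)
(* concrete reals R, with Coquelicot. R^2 is modelled as R*R,
   with i acting by (a,b) |-> (-b,a). *)
From Stdlib Require Import Reals.
From Coquelicot Require Import Coquelicot.
Open Scope R_scope.

Definition pt := (R * R)%type.

Definition dot (u v : pt) : R := fst u * fst v + snd u * snd v.
Definition rot (u : pt) : pt := (- snd u, fst u).

Definition is_norm (N : pt -> R) : Prop :=
  (forall x, N x = 0 -> x = (0, 0)) /\
  (forall a x, N (a * fst x, a * snd x) = Rabs a * N x) /\
  (forall x y, N (fst x + fst y, snd x + snd y) <= N x + N y).

Definition strictly_convex (N : pt -> R) : Prop :=
  forall x y, N x = 1 -> N y = 1 -> x <> y ->
    N ((fst x + fst y) / 2, (snd x + snd y) / 2) < 1.

Definition C1_away_from_0 (N : pt -> R) : Prop :=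
  exists g1 g2 : R -> R -> R,
    forall x y, (x, y) <> (0, 0) ->
      differentiable_pt_lim (fun a b => N (a, b)) x y (g1 x y) (g2 x y) /\
      continuity_2d_pt g1 x y /\ continuity_2d_pt g2 x y.

Definition arclength_param (N : pt -> R) (gam dgam : R -> pt) : Prop :=
  (forall t, gam (t + 2 * PI) = gam t) /\
  (forall t, is_derive gam t (dgam t)) /\
  (forall t, continuous dgam t) /\
  (forall t, dot (dgam t) (dgam t) = 1) /\
  (forall z, N z = 1 <-> exists t, gam t = z) /\
  (forall s t, gam s = gam t -> exists k : Z, s - t = 2 * PI * IZR k) /\
  (forall t, 0 < dot (dgam t) (rot (gam t))).   (* counterclockwise *)

Definition C1_periodic (l : R -> R) : Prop :=
  (forall t, l (t + 2 * PI) = l t) /\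
  exists dl : R -> R, forall t, is_derive l t (dl t) /\ continuous dl t.

(* ENT: Phi in C^1(dB; R^2) with d/dtheta Phi(gam theta) = lambda(theta) gam'(theta),
   lambda in C^1(R/2piZ).  Only the values of Phi on dB matter. *)
Definition ENT (gam dgam : R -> pt) (Phi : pt -> pt) : Prop :=
  exists lam : R -> R, C1_periodic lam /\
    forall t, is_derive (fun s => Phi (gam s)) t
                        (lam t * fst (dgam t), lam t * snd (dgam t)).

Definition Phi_xi (gam dgam : R -> pt) (theta0 : R) (z : pt) : pt :=
  if Rlt_dec 0 (dot z (rot (gam theta0))) then dgam theta0 else (0, 0).

(* Main.v *)
Require Import Defs.
From Stdlib Require Import Reals Lra Lia ZArith ClassicalEpsilon.
From Coquelicot Require Import Coquelicot.
Open Scope R_scope.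

Lemma is_derive_fst_ (h : R -> R * R) x l :
  is_derive h x l -> is_derive (fun t => fst (h t)) x (fst l).
Proof.
  intros H.
  apply (filterdiff_comp' h fst x (fun y => scal y l) fst H).
  apply filterdiff_linear, is_linear_fst.
Qed.

Lemma is_derive_snd_ (h : R -> R * R) x l :
  is_derive h x l -> is_derive (fun t => snd (h t)) x (snd l).
Proof.
  intros H.
  apply (filterdiff_comp' h snd x (fun y => scal y l) snd H).
  apply filterdiff_linear, is_linear_snd.
Qed.

Lemma is_derive_pair_ (f g : R -> R) x a b :
  is_derive f x a -> is_derive g x b -> is_derive (fun t => (f t, g t)) x (a, b).
Proof.
  intros Hf Hg.
  unfold is_derive.
  eapply filterdiff_ext_lin.
  apply (filterdiff_comp'_2 f g (fun u v => (u, v)) x _ _ (fun u v => (u, v)) Hf Hg).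
  apply filterdiff_linear. 
  apply is_linear_ext with (l1 := fun t => t). intros [u v]; reflexivity.
  apply is_linear_id.
  intros y. reflexivity.
Qed.

Lemma sq_rmax_derive y : is_derive (fun y => Rmax 0 y ^ 2) y (2 * Rmax 0 y).
Proof.
  destruct (Rlt_dec 0 y) as [Hp|Hn].
  - apply is_derive_ext_loc with (f := fun y => y ^ 2).
    + exists (mkposreal y Hp). intros z Hz. unfold ball in Hz; simpl in Hz.
      unfold AbsRing_ball, abs, minus, plus, opp in Hz; simpl in Hz.
      apply Rabs_lt_between in Hz. rewrite Rmax_right by lra. reflexivity.
    + rewrite Rmax_right by lra. auto_derive; [auto| ring].
  - destruct (Rlt_dec y 0) as [Hm|Hz].
    + apply is_derive_ext_loc with (f := fun _ => 0).
      * assert (Hp : 0 < - y) by lra. exists (mkposreal _ Hp). intros z Hz. unfold ball in Hz; simpl in Hz.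
        unfold AbsRing_ball, abs, minus, plus, opp in Hz; simpl in Hz.
        apply Rabs_lt_between in Hz. rewrite Rmax_left by lra. change (@eq R 0 (0^2)). ring.
      * rewrite Rmax_left by lra. replace (2 * 0) with 0 by ring. apply is_derive_Reals, derivable_pt_lim_const.
    + assert (y = 0) by lra. subst y. rewrite Rmax_left by lra.
      apply is_derive_Reals. intros eps Heps. exists (mkposreal eps Heps).
      intros h Hh0 Hh. simpl in Hh. rewrite Rplus_0_l. rewrite (Rmax_left 0 0) by lra.
      replace (2*0) with 0 by ring.
      destruct (Rle_dec h 0).
      * rewrite Rmax_left by lra. replace ((0^2 - 0^2)/h - 0) with 0 by (field; auto).
        rewrite Rabs_R0. lra.
      * rewrite Rmax_right by lra. replace ((h^2 - 0^2)/h - 0) with h by (field; auto).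
        exact Hh.
Qed.

Definition bq (eta x : R) : R := 30 / eta ^ 5 * (Rmax 0 (x * (eta - x))) ^ 2.
Definition dbq (eta x : R) : R := 30 / eta ^ 5 * (2 * Rmax 0 (x * (eta - x)) * (eta - 2 * x)).

Lemma bq_derive eta x : is_derive (bq eta) x (dbq eta x).
Proof.
  unfold bq, dbq.
  apply is_derive_scal.
  pose proof (is_derive_comp (fun y => Rmax 0 y ^ 2) (fun x => x * (eta - x)) x
     (2 * Rmax 0 (x * (eta - x))) (eta - 2 * x)) as H.
  simpl in H.
  replace (2 * Rmax 0 (x * (eta - x)) * (eta - 2 * x)) with (scal (eta - 2 * x) (2 * Rmax 0 (x * (eta - x)))).
  apply H. apply sq_rmax_derive.
  auto_derive; auto; ring.
  unfold scal; simpl; unfold mult; simpl; ring.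
Qed.

Lemma Rmax_cont : forall y, continuity_pt (fun y => Rmax 0 y) y.
Proof.
  intros y.
  apply (continuity_pt_ext (fun y => (y + Rabs y) / 2)).
  intros z. unfold Rmax. destruct (Rle_dec 0 z).
  rewrite Rabs_right by lra. field. rewrite Rabs_left by lra. field.
  apply continuity_pt_div. apply continuity_pt_plus. apply continuity_pt_id.
  apply Rcontinuity_abs. apply continuity_pt_const. intros a b; auto. lra.
Qed.

Ltac cst := apply continuity_pt_const; intros ? ?; reflexivity.

Lemma dbq_cont eta x : continuous (dbq eta) x.
Proof.
  apply continuity_pt_filterlim. unfold dbq.
  apply continuity_pt_mult. cst.
  apply continuity_pt_mult. apply continuity_pt_mult. cst.
  apply (continuity_pt_comp (fun x => x * (eta - x)) (fun y => Rmax 0 y)).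
  apply continuity_pt_mult. apply continuity_pt_id.
  apply continuity_pt_minus. cst. apply continuity_pt_id.
  apply Rmax_cont.
  apply continuity_pt_minus. cst.
  apply continuity_pt_mult. cst. apply continuity_pt_id.
Qed.

Lemma bq_cont eta x : continuous (bq eta) x.
Proof. apply continuity_pt_filterlim. apply derivable_continuous_pt. exists (dbq eta x). apply is_derive_Reals, bq_derive. Qed.

Lemma bq_ge0 eta x : 0 < eta -> 0 <= bq eta x.
Proof.
  intros He. unfold bq. apply Rmult_le_pos.
  apply Rdiv_le_0_compat. lra. apply pow_lt; lra.
  apply pow2_ge_0.
Qed.

Lemma bq_out eta x : 0 < eta -> (x <= 0 \/ eta <= x) -> bq eta x = 0 /\ dbq eta x = 0.
Proof.
  intros He Hx. unfold bq, dbq. rewrite Rmax_left. split; ring.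
  destruct Hx as [Hx|Hx].
  replace (x * (eta - x)) with (- ((-x) * (eta - x))) by ring.
  assert (0 <= (-x) * (eta - x)) by (apply Rmult_le_pos; lra). lra.
  replace (x * (eta - x)) with (- (x * (x - eta))) by ring.
  assert (0 <= x * (x - eta)) by (apply Rmult_le_pos; lra). lra.
Qed.

Definition Bq (eta x : R) : R := 30 / eta ^ 5 * (eta^2 * x^3 / 3 - eta * x^4 / 2 + x^5 / 5).

Lemma Bq_derive eta x : 0 < eta -> 0 <= x <= eta -> is_derive (Bq eta) x (bq eta x).
Proof.
  intros He Hx. unfold Bq, bq.
  rewrite Rmax_right by (apply Rmult_le_pos; lra).
  auto_derive. auto. field. lra.
Qed.

Lemma Bq_0 eta : 0 < eta -> Bq eta 0 = 0.
Proof. intros. unfold Bq. field. lra. Qed.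
Lemma Bq_eta eta : 0 < eta -> Bq eta eta = 1.
Proof. intros. unfold Bq. field. lra. Qed.

Lemma deriv_pos_right f x l : is_derive f x l -> 0 < l ->
  exists h0, 0 < h0 /\ forall h, 0 < h < h0 -> f x < f (x + h).
Proof.
  intros H Hl. apply is_derive_Reals in H.
  destruct (H (l/2) ltac:(lra)) as [d Hd].
  exists d. split. apply cond_pos. intros h Hh.
  assert (Hh0 : h <> 0) by lra.
  assert (Ha : Rabs h < d) by (rewrite Rabs_right; lra).
  specialize (Hd h Hh0 Ha). apply Rabs_lt_between in Hd.
  assert (0 < (f (x + h) - f x) / h) by lra.
  assert (0 < f (x+h) - f x).
  { replace (f (x + h) - f x) with (((f (x + h) - f x) / h) * h) by (field; lra).
    apply Rmult_lt_0_compat; lra. }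
  lra.
Qed.

Lemma deriv_neg_right f x l : is_derive f x l -> l < 0 ->
  exists h0, 0 < h0 /\ forall h, 0 < h < h0 -> f (x + h) < f x.
Proof.
  intros H Hl.
  assert (H' : is_derive (fun t => - f t) x (- l)).
  { apply is_derive_opp in H. exact H. }
  destruct (deriv_pos_right _ _ _ H' ltac:(lra)) as [h0 [Hh0 Hh]].
  exists h0; split; auto. intros h Hh1. specialize (Hh h Hh1). lra.
Qed.

Lemma periodic_nat (f : R -> R) T : (forall s, f (s + T) = f s) ->
  forall n s, f (s + T * INR n) = f s.
Proof.
  intros Hp n. induction n; intros s.
  simpl. rewrite Rmult_0_r, Rplus_0_r. auto.
  rewrite S_INR. replace (s + T * (INR n + 1)) with ((s + T * INR n) + T) by ring.
  rewrite Hp. auto.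
Qed.

Lemma periodic_Z (f : R -> R) T : (forall s, f (s + T) = f s) ->
  forall k s, f (s + T * IZR k) = f s.
Proof.
  intros Hp k s. destruct k as [|p|p].
  - simpl. rewrite Rmult_0_r, Rplus_0_r. auto.
  - rewrite <- positive_nat_Z, <- INR_IZR_INZ. apply periodic_nat; auto.
  - rewrite <- (periodic_nat f T Hp (Pos.to_nat p) (s + T * IZR (Z.neg p))).
    f_equal. rewrite INR_IZR_INZ, positive_nat_Z.
    rewrite <- Pos2Z.opp_pos, opp_IZR. ring.
Qed.


Lemma cmul (f g : R -> R) x : continuous f x -> continuous g x -> continuous (fun s => f s * g s) x.
Proof. intros Hf Hg. apply continuity_pt_filterlim. apply continuity_pt_filterlim in Hf, Hg. apply continuity_pt_mult; auto. Qed.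
Lemma cplus (f g : R -> R) x : continuous f x -> continuous g x -> continuous (fun s => f s + g s) x.
Proof. intros Hf Hg. apply continuity_pt_filterlim. apply continuity_pt_filterlim in Hf, Hg. apply continuity_pt_plus; auto. Qed.
Lemma cminus (f g : R -> R) x : continuous f x -> continuous g x -> continuous (fun s => f s - g s) x.
Proof. intros Hf Hg. apply continuity_pt_filterlim. apply continuity_pt_filterlim in Hf, Hg. apply continuity_pt_minus; auto. Qed.
Lemma cconst (c : R) x : continuous (fun _ : R => c) x.
Proof. apply continuity_pt_filterlim. apply continuity_pt_const. intros ? ?; reflexivity. Qed.
Lemma cabs (f : R -> R) x : continuous f x -> continuous (fun s => Rabs (f s)) x.
Proof. intros Hf. apply continuity_pt_filterlim. apply continuity_pt_filterlim in Hf.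
  apply (continuity_pt_comp f Rabs); auto. apply Rcontinuity_abs. Qed.
Ltac rring := match goal with |- ?a = ?b => change (@eq R a b) end; ring.

Lemma ex_RInt_all (f : R -> R) a b : (forall x, continuous f x) -> ex_RInt f a b.
Proof. intros H. apply (ex_RInt_continuous (V:=R_CompleteNormedModule)). intros; apply H. Qed.

Lemma RInt_zero_on (f : R -> R) a b : (forall x, Rmin a b < x < Rmax a b -> f x = 0) ->
  RInt f a b = 0.
Proof.
  intros H. rewrite (RInt_ext f (fun _ => 0)) by auto.
  rewrite RInt_const. unfold scal; simpl; unfold mult; simpl. ring.
Qed.

Lemma const_zero_deriv (H : R -> R) : (forall x, is_derive H x 0) -> forall a b, H a = H b.
Proof.
  intros Hd a b.
  destruct (MVT_gen H a b (fun _ => 0)) as [c [_ Hc]].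
  intros; apply Hd.
  intros x _. apply derivable_continuous_pt. exists 0. apply is_derive_Reals, Hd.
  lra.
Qed.

Lemma cont_is_RInt (f : R -> R) a : (forall x, continuous f x) ->
  forall t, is_derive (fun t => RInt f a t) t (f t).
Proof.
  intros Hc t. apply (is_derive_RInt f (fun t => RInt f a t) a t).
  exists (mkposreal 1 Rlt_0_1). intros y _. apply (RInt_correct (V:=R_CompleteNormedModule)), ex_RInt_all; auto.
  apply Hc.
Qed.

Lemma RInt_lin (f g : R -> R) a b k1 k2 : ex_RInt f a b -> ex_RInt g a b ->
  RInt (fun x => k1 * f x + k2 * g x) a b = k1 * RInt f a b + k2 * RInt g a b.
Proof.
  intros Hf Hg.
  rewrite (RInt_plus (V:=R_CompleteNormedModule) (fun x => k1 * f x) (fun x => k2 * g x)).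
  pose proof (RInt_scal (V:=R_CompleteNormedModule) f a b k1 Hf) as E1.
  pose proof (RInt_scal (V:=R_CompleteNormedModule) g a b k2 Hg) as E2.
  simpl in E1, E2. unfold scal in E1, E2; simpl in E1, E2. unfold mult in E1, E2; simpl in E1, E2.
  rewrite E1, E2. reflexivity.
  apply (ex_RInt_scal (V:=R_CompleteNormedModule) f a b k1 Hf).
  apply (ex_RInt_scal (V:=R_CompleteNormedModule) g a b k2 Hg).
Qed.

Lemma avg_close (m w : R -> R) a b p eps : a <= b ->
  (forall x, continuous m x) -> (forall x, continuous w x) ->
  (forall x, 0 <= m x) -> RInt m a b = 1 ->
  (forall s, a <= s <= b -> Rabs (w s - p) <= eps) ->
  Rabs (RInt (fun s => m s * w s) a b - p) <= eps.
Proof.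
  intros Hab Hm Hw Hm0 H1 Hs.
  assert (Hex1 : ex_RInt (fun s => m s * w s) a b).
  { apply ex_RInt_all. intros; apply cmul; auto. }
  assert (Hex2 : ex_RInt (fun s => m s * p) a b).
  { apply ex_RInt_all. intros; apply cmul; auto. apply cconst. }
  assert (E : RInt (fun s => m s * w s) a b - p = RInt (fun s => m s * (w s - p)) a b).
  { rewrite (RInt_ext (fun s => m s * (w s - p)) (fun s => 1 * (m s * w s) + (- p) * m s)).
    rewrite RInt_lin, H1. ring. auto. apply ex_RInt_all; auto.
    intros x _; rring. }
  rewrite E.
  assert (Hex3 : ex_RInt (fun s => m s * (w s - p)) a b).
  { apply ex_RInt_all. intros; apply cmul; auto. apply cminus; auto. apply cconst. }
  eapply Rle_trans. apply abs_RInt_le; auto.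
  apply Rle_trans with (RInt (fun s => eps * m s + 0 * m s) a b).
  apply RInt_le; auto.
  apply ex_RInt_all. intros. apply cabs. apply cmul; auto. apply cminus; auto. apply cconst.
  apply ex_RInt_all. intros. apply cplus; apply cmul; auto; apply cconst.
  intros x Hx. rewrite Rabs_mult, Rabs_right by (apply Rle_ge; auto).
  rewrite Rmult_comm. rewrite Rmult_0_l, Rplus_0_r.
  apply Rmult_le_compat_r; auto. apply Hs; lra.
  rewrite RInt_lin, H1. lra.
  apply ex_RInt_all; auto. apply ex_RInt_all; auto.
Qed.

Definition kk (c s : R) : R := IZR (up ((s - c) / (2 * PI))) - 1.
Definition rr (c s : R) : R := s - 2 * PI * kk c s.

Lemma rr_alt c s : rr c s = c + 2 * PI * ((s - c) / (2 * PI) - IZR (up ((s - c) / (2 * PI))) + 1).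
Proof. unfold rr, kk. pose proof PI_RGT_0. field. lra. Qed.

Lemma rr_range c s : c <= rr c s < c + 2 * PI.
Proof.
  rewrite rr_alt. pose proof PI_RGT_0.
  destruct (archimed ((s - c) / (2 * PI))) as [H1 H2].
  set (x := (s - c) / (2 * PI)) in *. set (u := IZR (up x)) in *.
  split.
  assert (0 <= 2 * PI * (x - u + 1)) by (apply Rmult_le_pos; lra). lra.
  assert (2 * PI * (x - u + 1) < 2 * PI * 1) by (apply Rmult_lt_compat_l; lra). lra.
Qed.

Lemma rr_shift c s : exists k : Z, rr c s = s + 2 * PI * IZR k.
Proof.
  exists (1 - up ((s - c) / (2 * PI)))%Z. unfold rr, kk.
  rewrite minus_IZR. ring.
Qed.

Lemma up_plus1 x : up (x + 1) = (up x + 1)%Z.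
Proof.
  destruct (archimed x) as [H1 H2].
  symmetry. apply tech_up; rewrite plus_IZR; lra.
Qed.

Lemma rr_per c s : rr c (s + 2 * PI) = rr c s.
Proof.
  unfold rr, kk. pose proof PI_RGT_0.
  replace ((s + 2 * PI - c) / (2 * PI)) with ((s - c) / (2 * PI) + 1) by (field; lra).
  rewrite up_plus1, plus_IZR. ring.
Qed.

Lemma rr_id c s : c <= s < c + 2 * PI -> rr c s = s.
Proof.
  intros Hs. unfold rr, kk. pose proof PI_RGT_0.
  assert (E : up ((s - c) / (2 * PI)) = 1%Z).
  { symmetry. apply tech_up.
    assert ((s - c) / (2 * PI) < 1).
    { apply (Rmult_lt_reg_r (2 * PI)). lra. unfold Rdiv. rewrite Rmult_assoc, Rinv_l by lra. lra. }
    simpl. lra.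
    assert (0 <= (s - c) / (2 * PI)).
    { apply Rdiv_le_0_compat; lra. }
    simpl. lra. }
  rewrite E. simpl. ring.
Qed.

Lemma rr_loc_int c s : c < rr c s ->
  exists e : posreal, forall s', Rabs (s' - s) < e -> rr c s' = s' - (s - rr c s).
Proof.
  intros Hc. pose proof PI_RGT_0. pose proof (rr_range c s) as Hr.
  rewrite rr_alt in Hc, Hr.
  destruct (archimed ((s - c) / (2 * PI))) as [H1 H2].
  set (x := (s - c) / (2 * PI)) in *. set (u := up x) in *.
  assert (Hlt : IZR u - x < 1).
  { assert (0 < 2 * PI * (x - IZR u + 1)) by lra.
    assert (0 < x - IZR u + 1) by (apply (Rmult_lt_reg_l (2*PI)); [lra| rewrite Rmult_0_r; lra]).
    lra. }
  set (d := Rmin (IZR u - x) (1 - (IZR u - x))).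
  assert (Hd : 0 < 2 * PI * d).
  { apply Rmult_lt_0_compat. lra. unfold d. apply Rmin_pos; lra. }
  exists (mkposreal _ Hd). simpl. intros s' Hs'.
  assert (Hx' : Rabs ((s' - c) / (2 * PI) - x) < d).
  { unfold x. replace ((s' - c) / (2 * PI) - (s - c) / (2 * PI)) with ((s' - s) / (2 * PI)) by (field; lra).
    unfold Rdiv. rewrite Rabs_mult, Rabs_inv, (Rabs_right (2 * PI)) by lra.
    apply (Rmult_lt_reg_r (2 * PI)). lra. rewrite Rmult_assoc, Rinv_l by lra.
    rewrite Rmult_1_r. lra. }
  assert (d <= IZR u - x) by apply Rmin_l.
  assert (d <= 1 - (IZR u - x)) by apply Rmin_r.
  apply Rabs_lt_between in Hx'.
  assert (E : up ((s' - c) / (2 * PI)) = u).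
  { symmetry. apply tech_up; lra. }
  rewrite (rr_alt c s'), (rr_alt c s), E. fold x. fold u. unfold x. field. lra.
Qed.

Lemma rr_loc_seam c s eta : rr c s = c -> 0 < eta < PI ->
  forall s', Rabs (s' - s) < eta -> rr c s' < c + eta \/ c + 2 * PI - eta < rr c s'.
Proof.
  intros Hc Heta s' Hs'. pose proof PI_RGT_0.
  rewrite rr_alt in Hc.
  destruct (archimed ((s - c) / (2 * PI))) as [H1 H2].
  set (x := (s - c) / (2 * PI)) in *. set (u := up x) in *.
  assert (Hx : x = IZR u - 1).
  { assert (2 * PI * (x - IZR u + 1) = 0) by lra.
    apply Rmult_integral in H0. destruct H0; lra. }
  set (h := (s' - c) / (2 * PI) - x).
  assert (Hh : Rabs h < eta / (2 * PI)).
  { unfold h, x. replace ((s' - c) / (2 * PI) - (s - c) / (2 * PI)) with ((s' - s) / (2 * PI)) by (field; lra).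
    unfold Rdiv. rewrite Rabs_mult, Rabs_inv, (Rabs_right (2 * PI)) by lra.
    apply Rmult_lt_compat_r. apply Rinv_0_lt_compat; lra. auto. }
  assert (Hq : eta / (2 * PI) < 1/2).
  { apply (Rmult_lt_reg_r (2 * PI)). lra. unfold Rdiv. rewrite Rmult_assoc, Rinv_l by lra. lra. }
  apply Rabs_lt_between in Hh.
  assert (Es : (s' - c) / (2 * PI) = IZR u - 1 + h) by (unfold h; lra).
  rewrite rr_alt. rewrite Es.
  destruct (Rle_dec 0 h).
  - left. assert (E : up (IZR u - 1 + h) = u) by (symmetry; apply tech_up; lra).
    rewrite E.
    replace (c + 2 * PI * (IZR u - 1 + h - IZR u + 1)) with (c + 2 * PI * h) by ring.
    assert (2 * PI * h < 2 * PI * (eta / (2 * PI))) by (apply Rmult_lt_compat_l; lra).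
    replace (2 * PI * (eta / (2 * PI))) with eta in H0 by (field; lra). lra.
  - right. assert (E : up (IZR u - 1 + h) = (u - 1)%Z) by (symmetry; apply tech_up; rewrite minus_IZR; simpl; lra).
    rewrite E, minus_IZR. simpl.
    replace (c + 2 * PI * (IZR u - 1 + h - (IZR u - 1) + 1)) with (c + 2 * PI + 2 * PI * h) by ring.
    assert (2 * PI * (- (eta / (2 * PI))) < 2 * PI * h) by (apply Rmult_lt_compat_l; lra).
    replace (2 * PI * (- (eta / (2 * PI)))) with (- eta) in H0 by (field; lra). lra.
Qed.

Lemma periodic_nat_gen {A} (f : R -> A) T : (forall s, f (s + T) = f s) ->
  forall n s, f (s + T * INR n) = f s.
Proof.
  intros Hp n. induction n; intros s.
  simpl. rewrite Rmult_0_r, Rplus_0_r. auto.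
  rewrite S_INR. replace (s + T * (INR n + 1)) with ((s + T * INR n) + T) by ring.
  rewrite Hp. auto.
Qed.

Lemma periodic_Z_gen {A} (f : R -> A) T : (forall s, f (s + T) = f s) ->
  forall k s, f (s + T * IZR k) = f s.
Proof.
  intros Hp k s. destruct k as [|p|p].
  - simpl. rewrite Rmult_0_r, Rplus_0_r. auto.
  - rewrite <- positive_nat_Z, <- INR_IZR_INZ. apply periodic_nat_gen; auto.
  - rewrite <- (periodic_nat_gen f T Hp (Pos.to_nat p) (s + T * IZR (Z.neg p))).
    f_equal. rewrite INR_IZR_INZ, positive_nat_Z.
    rewrite <- Pos2Z.opp_pos, opp_IZR. ring.
Qed.

Lemma fst_derive (gam dgam : R -> pt) : (forall t, is_derive gam t (dgam t)) ->
  forall t, is_derive (fun t => fst (gam t)) t (fst (dgam t)).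
Proof. intros H t. apply is_derive_fst_. auto. Qed.
Lemma snd_derive (gam dgam : R -> pt) : (forall t, is_derive gam t (dgam t)) ->
  forall t, is_derive (fun t => snd (gam t)) t (snd (dgam t)).
Proof. intros H t. apply is_derive_snd_. auto. Qed.

Lemma shift_derive (f : R -> R) df t T : is_derive f (t + T) df -> is_derive (fun s => f (s + T)) t df.
Proof.
  intros H.
  pose proof (is_derive_comp f (fun s => s + T) t df 1 H) as H2.
  replace df with (scal 1 df). apply H2. auto_derive; auto. apply (scal_one (K:=R_Ring)).
Qed.

Lemma deriv_periodic (f df : R -> R) : (forall s, f (s + 2 * PI) = f s) ->
  (forall t, is_derive f t (df t)) -> forall t, df (t + 2 * PI) = df t.
Proof.
  intros Hp Hd t.
  assert (H1 : is_derive f t (df (t + 2 * PI))).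
  { apply is_derive_ext with (f := fun s => f (s + 2 * PI)). auto.
    apply shift_derive. auto. }
  apply is_derive_unique in H1. rewrite (is_derive_unique _ _ _ (Hd t)) in H1. auto.
Qed.

Lemma cont_fst (h : R -> pt) x : continuous h x -> continuous (fun t => fst (h t)) x.
Proof.
  intros H. apply continuous_comp with (g := fst); auto.
  destruct (h x) eqn:E. apply continuous_fst.
Qed.
Lemma cont_snd (h : R -> pt) x : continuous h x -> continuous (fun t => snd (h t)) x.
Proof.
  intros H. apply continuous_comp with (g := snd); auto.
  destruct (h x) eqn:E. apply continuous_snd.
Qed.

Lemma lin_derive (f1 f2 : R -> R) d1 d2 a b t : is_derive f1 t d1 -> is_derive f2 t d2 ->
  is_derive (fun s => f1 s * a + f2 s * b) t (d1 * a + d2 * b).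
Proof.
  intros H1 H2. apply is_derive_Reals in H1, H2. apply is_derive_Reals.
  apply (derivable_pt_lim_plus (fun s => f1 s * a) (fun s => f2 s * b)).
  replace (d1*a) with (d1*a + f1 t * 0) by ring.
  apply (derivable_pt_lim_mult f1 (fun _ => a)). auto. apply derivable_pt_lim_const.
  replace (d2*b) with (d2*b + f2 t * 0) by ring.
  apply (derivable_pt_lim_mult f2 (fun _ => b)). auto. apply derivable_pt_lim_const.
Qed.

Lemma opp_derive (f : R -> R) d t : is_derive f t d -> is_derive (fun s => - f s) t (- d).
Proof. intros H. apply (is_derive_opp (K:=R_AbsRing) (V:=R_NormedModule) f t d H). Qed.

Lemma int_zero (k : Z) d : d = 2 * PI * IZR k -> - (2 * PI) < d < 2 * PI -> k = 0%Z.
Proof.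
  intros E H. pose proof PI_RGT_0.
  assert (-1 < IZR k < 1).
  { subst d. split.
    apply (Rmult_lt_reg_l (2*PI)). lra. lra.
    apply (Rmult_lt_reg_l (2*PI)). lra. lra. }
  destruct H1 as [Ha Hb]. apply lt_IZR in Ha. apply lt_IZR in Hb. lia.
Qed.

Lemma deriv_const_unique (f : R -> R) t l : is_derive f t l -> (forall s, f s = 1) -> l = 0.
Proof.
  intros H Hf.
  assert (H2 : is_derive (fun _ => 1) t l) by (apply is_derive_ext with (f := f); auto).
  apply is_derive_Reals in H2.
  apply (uniqueness_limite (fun _ => 1) t). auto. apply derivable_pt_lim_const.
Qed.

Lemma geometry (N : pt -> R) (gam dgam : R -> pt) (c : R) :
  is_norm N -> C1_away_from_0 N -> arclength_param N gam dgam ->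
  exists th1, c < th1 < c + 2 * PI /\ gam th1 = (- fst (gam c), - snd (gam c)) /\
   (forall t, c < t < th1 -> 0 < fst (gam t) * (- snd (gam c)) + snd (gam t) * fst (gam c)) /\
   (forall t, th1 <= t < c + 2 * PI -> fst (gam t) * (- snd (gam c)) + snd (gam t) * fst (gam c) <= 0) /\
   fst (dgam th1) = - fst (dgam c) /\ snd (dgam th1) = - snd (dgam c).
Proof.
  intros [N0 [Nh Ntri]] [g1 [g2 HC1]] [Hper [Hd [Hdc [Hunit [Hsph [Hinj Hccw]]]]]].
  pose proof PI_RGT_0 as HPI.
  set (x0 := fst (gam c)). set (y0 := snd (gam c)).
  assert (Ec : gam c = (x0, y0)) by (unfold x0, y0; apply surjective_pairing).
  assert (N00 : N (0, 0) = 0).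
  { pose proof (Nh 0 (0, 0)) as H. simpl in H. rewrite Rmult_0_l, Rabs_R0, Rmult_0_l in H. exact H. }
  assert (Nsph : forall t, N (gam t) = 1) by (intros t; apply Hsph; exists t; auto).
  assert (Hxi : (x0, y0) <> (0, 0)).
  { intros E. pose proof (Nsph c) as H. rewrite Ec, E, N00 in H. lra. }
  assert (Hxy : 0 < x0 * x0 + y0 * y0).
  { destruct (Req_dec x0 0) as [E1|E1]. destruct (Req_dec y0 0) as [E2|E2].
    exfalso; apply Hxi; rewrite E1, E2; auto.
    assert (0 < y0 * y0) by (apply Rsqr_pos_lt; auto). nra.
    assert (0 < x0 * x0) by (apply Rsqr_pos_lt; auto). nra. }
  assert (Nm : N (- x0, - y0) = 1).
  { pose proof (Nh (-1) (x0, y0)) as H. simpl in H.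
    replace (-1 * x0) with (- x0) in H by ring. replace (-1 * y0) with (- y0) in H by ring.
    rewrite H. rewrite Rabs_left by lra. rewrite <- Ec, Nsph. ring. }
  destruct (proj1 (Hsph (- x0, - y0)) Nm) as [t1 Ht1].
  set (th1 := rr c t1).
  assert (Hth1 : gam th1 = (- x0, - y0)).
  { destruct (rr_shift c t1) as [k Hk]. unfold th1. rewrite Hk.
    rewrite (periodic_Z_gen gam (2 * PI) Hper k t1). auto. }
  destruct (rr_range c t1) as [Hr1 Hr2]. fold th1 in Hr1, Hr2.
  assert (Hne : th1 <> c).
  { intros E. rewrite E, Ec in Hth1. injection Hth1. intros. apply Hxi. f_equal; lra. }
  set (g := fun t => fst (gam t) * (- y0) + snd (gam t) * x0).
  set (dg := fun t => fst (dgam t) * (- y0) + snd (dgam t) * x0).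
  assert (Hg : forall t, is_derive g t (dg t)).
  { intros t. apply lin_derive. apply fst_derive; auto. apply snd_derive; auto. }
  assert (Hgc : forall x, continuity_pt g x).
  { intros x. apply derivable_continuous_pt. exists (dg x). apply is_derive_Reals, Hg. }
  assert (Hzero : forall t, c <= t < c + 2 * PI -> g t = 0 -> t = c \/ t = th1).
  { intros t Ht Hgt. unfold g in Hgt.
    set (z1 := fst (gam t)) in *. set (z2 := snd (gam t)) in *.
    set (mu := (z1 * x0 + z2 * y0) / (x0 * x0 + y0 * y0)).
    assert (Ez1 : z1 = mu * x0).
    { assert (K : z1 * (x0 * x0 + y0 * y0) = (z1 * x0 + z2 * y0) * x0).
      { apply Rminus_diag_uniq. replace (z1 * (x0 * x0 + y0 * y0) - (z1 * x0 + z2 * y0) * x0) with (y0 * (z1 * (- y0) + z2 * x0) * (-1)) by ring.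
        rewrite Hgt. ring. }
      unfold mu. replace ((z1 * x0 + z2 * y0) / (x0 * x0 + y0 * y0) * x0) with (((z1 * x0 + z2 * y0) * x0) / (x0 * x0 + y0 * y0)) by (field; lra).
      rewrite <- K. field. lra. }
    assert (Ez2 : z2 = mu * y0).
    { assert (K : z2 * (x0 * x0 + y0 * y0) = (z1 * x0 + z2 * y0) * y0).
      { apply Rminus_diag_uniq. replace (z2 * (x0 * x0 + y0 * y0) - (z1 * x0 + z2 * y0) * y0) with (x0 * (z1 * (- y0) + z2 * x0)) by ring.
        rewrite Hgt. ring. }
      unfold mu. replace ((z1 * x0 + z2 * y0) / (x0 * x0 + y0 * y0) * y0) with (((z1 * x0 + z2 * y0) * y0) / (x0 * x0 + y0 * y0)) by (field; lra).
      rewrite <- K. field. lra. }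
    assert (Eg : gam t = (mu * x0, mu * y0)).
    { rewrite (surjective_pairing (gam t)). fold z1 z2. rewrite Ez1, Ez2. auto. }
    assert (Hmu : Rabs mu = 1).
    { pose proof (Nh mu (x0, y0)) as H. simpl in H. rewrite <- Eg, Nsph, <- Ec, Nsph in H. lra. }
    assert (Hmu2 : mu = 1 \/ mu = -1).
    { unfold Rabs in Hmu. destruct (Rcase_abs mu); [right|left]; lra. }
    destruct Hmu2 as [Hm|Hm].
    - left. assert (E : gam t = gam c) by (rewrite Eg, Ec, Hm; f_equal; ring).
      destruct (Hinj t c E) as [k Hk].
      assert (k = 0%Z) by (apply (int_zero k (t - c)); lra).
      subst k. simpl in Hk. lra.
    - right. assert (E : gam t = gam th1) by (rewrite Eg, Hth1, Hm; f_equal; ring).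
      destruct (Hinj t th1 E) as [k Hk].
      assert (k = 0%Z) by (apply (int_zero k (t - th1)); lra).
      subst k. simpl in Hk. lra. }
  assert (Hg0 : g c = 0) by (unfold g; fold x0 y0; ring).
  assert (Hg1 : g th1 = 0) by (unfold g; rewrite Hth1; simpl; ring).
  assert (Hdg0 : 0 < dg c).
  { pose proof (Hccw c) as H. unfold dot, rot in H. simpl in H. fold x0 y0 in H. unfold dg. lra. }
  assert (Hdg1 : dg th1 < 0).
  { pose proof (Hccw th1) as H. unfold dot, rot in H. rewrite Hth1 in H. simpl in H. unfold dg. lra. }
  assert (Hlt1 : c < th1) by lra.
  assert (Hpos : forall t, c < t < th1 -> 0 < g t).
  { intros t Ht. destruct (Rlt_dec 0 (g t)) as [|Hn]; auto. exfalso.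
    destruct (deriv_pos_right g c (dg c) (Hg c) Hdg0) as [h0 [Hh0 Hh]].
    set (h := Rmin (h0 / 2) ((t - c) / 2)).
    assert (Hh1 : 0 < h) by (unfold h; apply Rmin_pos; lra).
    assert (Hh2 : h <= h0 / 2) by apply Rmin_l.
    assert (Hh3 : h <= (t - c) / 2) by apply Rmin_r.
    assert (Hgh : 0 < g (c + h)) by (rewrite <- Hg0; apply Hh; lra).
    destruct (Req_dec (g t) 0) as [Z|Z].
    - destruct (Hzero t ltac:(lra) Z); lra.
    - destruct (IVT_gen g (c + h) t 0 Hgc) as [s [Hs1 Hs2]].
      rewrite Rmin_right, Rmax_left by lra. lra.
      rewrite Rmin_left, Rmax_right in Hs1 by lra.
      destruct (Hzero s ltac:(lra) Hs2); lra. }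
  assert (Hneg : forall t, th1 <= t < c + 2 * PI -> g t <= 0).
  { intros t Ht. destruct (Req_dec t th1) as [E|E]. subst t. lra.
    destruct (Rle_dec (g t) 0) as [|Hn]; auto. exfalso.
    destruct (deriv_neg_right g th1 (dg th1) (Hg th1) Hdg1) as [h0 [Hh0 Hh]].
    set (h := Rmin (h0 / 2) ((t - th1) / 2)).
    assert (Hh1 : 0 < h) by (unfold h; apply Rmin_pos; lra).
    assert (Hh2 : h <= h0 / 2) by apply Rmin_l.
    assert (Hh3 : h <= (t - th1) / 2) by apply Rmin_r.
    assert (Hgh : g (th1 + h) < 0) by (rewrite <- Hg1; apply Hh; lra).
    destruct (IVT_gen g (th1 + h) t 0 Hgc) as [s [Hs1 Hs2]].
    rewrite Rmin_left, Rmax_right by lra. lra.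
    rewrite Rmin_left, Rmax_right in Hs1 by lra.
    destruct (Hzero s ltac:(lra) Hs2); lra. }
  destruct (HC1 x0 y0 Hxi) as [Hdiff _].
  set (p := g1 x0 y0) in *. set (q := g2 x0 y0) in *.
  set (e1 := fst (dgam c)). set (e2 := snd (dgam c)).
  set (f1 := fst (dgam th1)). set (f2 := snd (dgam th1)).
  assert (O1 : p * e1 + q * e2 = 0).
  { pose proof (derivable_pt_lim_comp_2d (fun a b => N (a, b)) (fun t => fst (gam t)) (fun t => snd (gam t)) c p q e1 e2 Hdiff) as H.
    assert (H' : is_derive (fun t => N (fst (gam t), snd (gam t))) c (p * e1 + q * e2)).
    { apply is_derive_Reals. apply H; apply is_derive_Reals. apply fst_derive; auto. apply snd_derive; auto. }
    apply (deriv_const_unique _ _ _ H'). intros s. rewrite <- surjective_pairing. auto. }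
  assert (O2 : p * (- f1) + q * (- f2) = 0).
  { assert (D : differentiable_pt_lim (fun a b => N (a, b)) ((fun t => - fst (gam t)) th1) ((fun t => - snd (gam t)) th1) p q).
    { simpl. rewrite Hth1. simpl. rewrite !Ropp_involutive. exact Hdiff. }
    pose proof (derivable_pt_lim_comp_2d (fun a b => N (a, b)) (fun t => - fst (gam t)) (fun t => - snd (gam t)) th1 p q (- f1) (- f2) D) as H.
    assert (H' : is_derive (fun t => N (- fst (gam t), - snd (gam t))) th1 (p * (- f1) + q * (- f2))).
    { apply is_derive_Reals. apply H; apply is_derive_Reals; apply opp_derive. apply fst_derive; auto. apply snd_derive; auto. }
    apply (deriv_const_unique _ _ _ H'). intros s.
    pose proof (Nh (-1) (gam s)) as Hs. replace (-1 * fst (gam s)) with (- fst (gam s)) in Hs by ring.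
    replace (-1 * snd (gam s)) with (- snd (gam s)) in Hs by ring.
    rewrite Hs, Nsph. rewrite Rabs_left by lra. ring. }
  assert (O3 : p * x0 + q * y0 = 1).
  { assert (D : differentiable_pt_lim (fun a b => N (a, b)) ((fun a => a * x0) 1) ((fun a => a * y0) 1) p q).
    { simpl. rewrite !Rmult_1_l. exact Hdiff. }
    pose proof (derivable_pt_lim_comp_2d (fun a b => N (a, b)) (fun a => a * x0) (fun a => a * y0) 1 p q x0 y0 D) as H.
    assert (H' : is_derive (fun a => N (a * x0, a * y0)) 1 (p * x0 + q * y0)).
    { apply is_derive_Reals. apply H; apply is_derive_Reals; auto_derive; auto; ring. }
    assert (H2 : is_derive (fun a : R => a) 1 (p * x0 + q * y0)).
    { apply is_derive_ext_loc with (f := fun a => N (a * x0, a * y0)); auto.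
      exists (mkposreal (1/2) ltac:(lra)). intros z Hz. unfold ball in Hz; simpl in Hz.
      unfold AbsRing_ball, abs, minus, plus, opp in Hz; simpl in Hz. apply Rabs_lt_between in Hz.
      pose proof (Nh z (x0, y0)) as Hn. simpl in Hn. rewrite Hn, <- Ec, Nsph, Rabs_right by lra. apply Rmult_1_r. }
    apply is_derive_Reals in H2.
    apply (uniqueness_limite (fun a => a) 1). auto. apply derivable_pt_lim_id. }
  assert (U1 : e1 * e1 + e2 * e2 = 1) by (pose proof (Hunit c) as H; unfold dot in H; exact H).
  assert (U2 : f1 * f1 + f2 * f2 = 1) by (pose proof (Hunit th1) as H; unfold dot in H; exact H).
  assert (C1 : e1 * (- y0) + e2 * x0 > 0) by (unfold dg in Hdg0; exact Hdg0).
  assert (C2 : f1 * (- y0) + f2 * x0 < 0) by (unfold dg in Hdg1; exact Hdg1).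
  set (cr := e1 * f2 - e2 * f1).
  assert (Pc : p * cr = 0).
  { unfold cr. replace (p * (e1 * f2 - e2 * f1)) with (f2 * (p * e1 + q * e2) - e2 * (p * f1 + q * f2)) by ring.
    rewrite O1. replace (p * f1 + q * f2) with (- (p * (- f1) + q * (- f2))) by ring. rewrite O2. ring. }
  assert (Qc : q * cr = 0).
  { unfold cr. replace (q * (e1 * f2 - e2 * f1)) with (e1 * (p * f1 + q * f2) - f1 * (p * e1 + q * e2) ) by ring.
    rewrite O1. replace (p * f1 + q * f2) with (- (p * (- f1) + q * (- f2))) by ring. rewrite O2. ring. }
  assert (Cr : cr = 0).
  { destruct (Req_dec p 0) as [Hp|Hp].
    destruct (Req_dec q 0) as [Hq|Hq]. rewrite Hp, Hq in O3. lra.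
    apply Rmult_integral in Qc. destruct Qc; [lra|auto].
    apply Rmult_integral in Pc. destruct Pc; [lra|auto]. }
  set (sg := e1 * f1 + e2 * f2).
  assert (F1 : f1 = sg * e1).
  { unfold sg. apply Rminus_diag_uniq.
    replace (f1 - (e1 * f1 + e2 * f2) * e1) with (f1 * (1 - e1 * e1) - e1 * e2 * f2) by ring.
    rewrite <- U1. replace (f1 * (e1 * e1 + e2 * e2 - e1 * e1) - e1 * e2 * f2) with (- e2 * cr) by (unfold cr; ring).
    rewrite Cr. ring. }
  assert (F2 : f2 = sg * e2).
  { unfold sg. apply Rminus_diag_uniq.
    replace (f2 - (e1 * f1 + e2 * f2) * e2) with (f2 * (1 - e2 * e2) - e1 * e2 * f1) by ring.
    rewrite <- U1. replace (f2 * (e1 * e1 + e2 * e2 - e2 * e2) - e1 * e2 * f1) with (e1 * cr) by (unfold cr; ring).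
    rewrite Cr. ring. }
  assert (S2 : sg * sg = 1).
  { rewrite F1, F2 in U2. replace (sg * e1 * (sg * e1) + sg * e2 * (sg * e2)) with (sg * sg * (e1 * e1 + e2 * e2)) in U2 by ring.
    rewrite U1 in U2. lra. }
  assert (Sn : sg < 0).
  { rewrite F1, F2 in C2. replace (sg * e1 * - y0 + sg * e2 * x0) with (sg * (e1 * - y0 + e2 * x0)) in C2 by ring.
    destruct (Rle_dec 0 sg); auto. assert (0 <= sg * (e1 * - y0 + e2 * x0)) by (apply Rmult_le_pos; lra). lra. lra. }
  assert (Sm : sg = -1) by nra.
  exists th1. split. lra. split. auto. split. exact Hpos. split. exact Hneg.
  split. fold f1 e1. rewrite F1, Sm. ring. fold f2 e2. rewrite F2, Sm. ring.
Qed.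

Lemma loc_of (P : R -> Prop) s (e : posreal) : (forall s', Rabs (s' - s) < e -> P s') -> locally s P.
Proof. intros H. exists e. intros y Hy. apply H. exact Hy. Qed.

Definition mm (c th1 eta x : R) : R := bq eta (x - c - eta) + bq eta (th1 - eta - x).
Definition dmm (c th1 eta x : R) : R := dbq eta (x - c - eta) - dbq eta (th1 - eta - x).

Lemma mm_derive c th1 eta x : is_derive (mm c th1 eta) x (dmm c th1 eta x).
Proof.
  unfold mm, dmm. apply is_derive_Reals.
  apply (derivable_pt_lim_plus (fun x => bq eta (x - c - eta)) (fun x => bq eta (th1 - eta - x))).
  - apply is_derive_Reals. replace (dbq eta (x - c - eta)) with (scal 1 (dbq eta (x - c - eta))).
    apply (is_derive_comp (bq eta) (fun x => x - c - eta)). apply bq_derive. auto_derive; auto.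
    apply (scal_one (K:=R_Ring)).
  - apply is_derive_Reals. replace (- dbq eta (th1 - eta - x)) with (scal (opp 1) (dbq eta (th1 - eta - x))).
    apply (is_derive_comp (bq eta) (fun x => th1 - eta - x)). apply bq_derive. auto_derive; auto.
    unfold scal; simpl. unfold mult; simpl. unfold opp; simpl. unfold one. simpl. ring.
Qed.

Lemma mm_cont c th1 eta x : continuous (mm c th1 eta) x.
Proof. apply continuity_pt_filterlim. apply derivable_continuous_pt. exists (dmm c th1 eta x). apply is_derive_Reals, mm_derive. Qed.

Lemma dmm_cont c th1 eta x : continuous (dmm c th1 eta) x.
Proof.
  unfold dmm. apply cminus.
  apply (continuous_comp (fun x => x - c - eta) (dbq eta)). apply cminus. apply cminus.
  apply continuous_id. apply cconst. apply cconst. apply dbq_cont.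
  apply (continuous_comp (fun x => th1 - eta - x) (dbq eta)). apply cminus. apply cconst. apply continuous_id. apply dbq_cont.
Qed.

Lemma mm_ge0 c th1 eta x : 0 < eta -> 0 <= mm c th1 eta x.
Proof. intros. unfold mm. pose proof (bq_ge0 eta (x - c - eta) H). pose proof (bq_ge0 eta (th1 - eta - x) H). lra. Qed.

Lemma mm_zero c th1 eta x : 0 < eta -> 4 * eta <= th1 - c ->
  (x <= c + eta \/ th1 - eta <= x) -> mm c th1 eta x = 0 /\ dmm c th1 eta x = 0.
Proof.
  intros He H4 Hx. unfold mm, dmm.
  destruct (bq_out eta (x - c - eta) He) as [A1 A2]. lra.
  destruct (bq_out eta (th1 - eta - x) He) as [B1 B2]. lra.
  rewrite A1, A2, B1, B2. split; ring.
Qed.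

Lemma mm_mid c th1 eta x : 0 < eta -> 4 * eta <= th1 - c ->
  c + 2 * eta <= x <= th1 - 2 * eta -> mm c th1 eta x = 0.
Proof.
  intros He H4 Hx. unfold mm.
  destruct (bq_out eta (x - c - eta) He) as [A1 A2]. lra.
  destruct (bq_out eta (th1 - eta - x) He) as [B1 B2]. lra.
  rewrite A1, B1. ring.
Qed.

Lemma mm_U c th1 eta x : 0 < eta -> 4 * eta <= th1 - c ->
  x <= c + 2 * eta -> mm c th1 eta x = bq eta (x - c - eta).
Proof.
  intros He H4 Hx. unfold mm.
  destruct (bq_out eta (th1 - eta - x) He) as [B1 B2]. lra.
  rewrite B1. ring.
Qed.

Lemma mm_V c th1 eta x : 0 < eta -> 4 * eta <= th1 - c ->
  th1 - 2 * eta <= x -> mm c th1 eta x = bq eta (th1 - eta - x).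
Proof.
  intros He H4 Hx. unfold mm.
  destruct (bq_out eta (x - c - eta) He) as [B1 B2]. lra.
  rewrite B1. ring.
Qed.

Definition lam0 c th1 eta s := mm c th1 eta (rr c s).
Definition dlam0 c th1 eta s := dmm c th1 eta (rr c s).

Lemma lam0_per c th1 eta s : lam0 c th1 eta (s + 2 * PI) = lam0 c th1 eta s.
Proof. unfold lam0. rewrite rr_per. auto. Qed.
Lemma dlam0_per c th1 eta s : dlam0 c th1 eta (s + 2 * PI) = dlam0 c th1 eta s.
Proof. unfold dlam0. rewrite rr_per. auto. Qed.

Lemma lam0_C1 c th1 eta s : 0 < eta -> 4 * eta <= th1 - c -> th1 < c + 2 * PI ->
  is_derive (lam0 c th1 eta) s (dlam0 c th1 eta s) /\ continuous (dlam0 c th1 eta) s.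
Proof.
  intros He H4 Hth. pose proof PI_RGT_0.
  destruct (rr_range c s) as [R1 R2].
  destruct (Rle_lt_or_eq_dec _ _ R1) as [Hlt|Heq].
  - destruct (rr_loc_int c s Hlt) as [e He'].
    set (K := s - rr c s).
    assert (L : locally s (fun s' => rr c s' = s' + - K)).
    { apply (loc_of _ s e). intros s' Hs'. rewrite He' by auto. unfold K. ring. }
    split.
    + apply is_derive_ext_loc with (f := fun s' => mm c th1 eta (s' + - K)).
      { destruct L as [e' He'']. exists e'. intros y Hy. unfold lam0. rewrite He''; auto. }
      unfold dlam0. replace (rr c s) with (s + - K) by (unfold K; ring).
      apply shift_derive. apply mm_derive.
    + apply continuous_ext_loc with (g := fun s' => dmm c th1 eta (s' + - K)).
      { destruct L as [e' He'']. exists e'. intros y Hy. unfold dlam0. rewrite He''; auto. }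
      apply (continuous_comp (fun s' => s' + - K) (dmm c th1 eta)).
      apply cplus. apply continuous_id. apply cconst. apply dmm_cont.
  - assert (Hz : forall s', Rabs (s' - s) < eta -> lam0 c th1 eta s' = 0 /\ dlam0 c th1 eta s' = 0).
    { intros s' Hs'. unfold lam0, dlam0. apply mm_zero; auto.
      destruct (rr_loc_seam c s eta (eq_sym Heq) ltac:(lra) s' Hs'); [left|right]; lra. }
    assert (L : locally s (fun s' => lam0 c th1 eta s' = 0 /\ dlam0 c th1 eta s' = 0)).
    { apply (loc_of _ s (mkposreal eta He)). auto. }
    assert (D0 : dlam0 c th1 eta s = 0).
    { apply Hz. rewrite Rminus_diag, Rabs_R0. auto. }
    split.
    + rewrite D0. apply is_derive_ext_loc with (f := fun _ => 0).
      { destruct L as [e' He'']. exists e'. intros y Hy. symmetry. apply He''; auto. }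
      apply is_derive_Reals, derivable_pt_lim_const.
    + apply continuous_ext_loc with (g := fun _ => 0).
      { destruct L as [e' He'']. exists e'. intros y Hy. symmetry. apply He''; auto. }
      apply cconst.
Qed.

Definition Tc (dgam : R -> pt) c th1 eta (pr : pt -> R) : R :=
  RInt (fun s => mm c th1 eta s * pr (dgam s)) c (c + 2 * PI).
Definition Pc (gam dgam : R -> pt) c : R := RInt (fun s => fst (gam s) * snd (dgam s)) c (c + 2 * PI).
Definition ca gam dgam c th1 eta := - Tc dgam c th1 eta snd / Pc gam dgam c.
Definition cb gam dgam c th1 eta := Tc dgam c th1 eta fst / Pc gam dgam c.
Definition lamf gam dgam c th1 eta s :=
  lam0 c th1 eta s + ca gam dgam c th1 eta * fst (gam s) + cb gam dgam c th1 eta * snd (gam s).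
Definition dlamf gam dgam c th1 eta s :=
  dlam0 c th1 eta s + ca gam dgam c th1 eta * fst (dgam s) + cb gam dgam c th1 eta * snd (dgam s).
Definition GG gam dgam c th1 eta (pr : pt -> R) t : R :=
  RInt (fun s => lamf gam dgam c th1 eta s * pr (dgam s)) c t.

Lemma der_cont (f : R -> R) df x : is_derive f x df -> continuous f x.
Proof. intros H. apply continuity_pt_filterlim. apply derivable_continuous_pt. exists df. apply is_derive_Reals, H. Qed.

Lemma mult_derive (f g : R -> R) df dg t : is_derive f t df -> is_derive g t dg ->
  is_derive (fun s => f s * g s) t (df * g t + f t * dg).
Proof.
  intros H1 H2. apply is_derive_Reals in H1, H2. apply is_derive_Reals.
  apply (derivable_pt_lim_mult f g); auto.
Qed.

Lemma dval (f : R -> R) (x l1 l2 : R) : is_derive f x l1 -> l1 = l2 -> is_derive f x l2.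
Proof. intros H E; subst; auto. Qed.

Lemma per_deriv_int (F dF : R -> R) a b : (forall s, is_derive F s (dF s)) -> (forall s, continuous dF s) ->
  F b = F a -> RInt dF a b = 0.
Proof.
  intros Hd Hc E.
  pose proof (is_RInt_derive (V:=R_CompleteNormedModule) F dF a b (fun x _ => Hd x) (fun x _ => Hc x)) as H.
  apply is_RInt_unique in H. rewrite H. rewrite E. unfold minus, plus, opp; simpl. ring.
Qed.

Lemma RChasles (f : R -> R) a b c : (forall x, continuous f x) -> RInt f a b + RInt f b c = RInt f a c.
Proof.
  intros H. apply (RInt_Chasles (V:=R_CompleteNormedModule)); apply ex_RInt_all; auto.
Qed.

Lemma gam_facts (gam dgam : R -> pt) : (forall t, is_derive gam t (dgam t)) -> (forall t, continuous dgam t) ->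
  (forall t, continuous (fun s => fst (gam s)) t) /\ (forall t, continuous (fun s => snd (gam s)) t) /\
  (forall t, continuous (fun s => fst (dgam s)) t) /\ (forall t, continuous (fun s => snd (dgam s)) t).
Proof.
  intros Hd Hdc. split; [|split; [|split]]; intros t.
  apply (der_cont _ (fst (dgam t))). apply fst_derive; auto.
  apply (der_cont _ (snd (dgam t))). apply snd_derive; auto.
  apply cont_fst; auto. apply cont_snd; auto.
Qed.

Lemma Pc_pos (gam dgam : R -> pt) c : (forall t, gam (t + 2 * PI) = gam t) ->
  (forall t, is_derive gam t (dgam t)) -> (forall t, continuous dgam t) ->
  (forall t, 0 < dot (dgam t) (rot (gam t))) ->
  0 < Pc gam dgam c /\
  RInt (fun s => snd (gam s) * fst (dgam s)) c (c + 2 * PI) = - Pc gam dgam c /\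
  RInt (fun s => fst (gam s) * fst (dgam s)) c (c + 2 * PI) = 0 /\
  RInt (fun s => snd (gam s) * snd (dgam s)) c (c + 2 * PI) = 0.
Proof.
  intros Hper Hd Hdc Hccw. pose proof PI_RGT_0.
  destruct (gam_facts gam dgam Hd Hdc) as [C1 [C2 [C3 C4]]].
  assert (Hsum : RInt (fun s => 1 * (fst (gam s) * snd (dgam s)) + 1 * (snd (gam s) * fst (dgam s))) c (c + 2 * PI) = 0).
  { apply (per_deriv_int (fun s => fst (gam s) * snd (gam s))).
    intros s. eapply dval. apply mult_derive; [apply fst_derive; auto | apply snd_derive; auto]. cbv beta; ring.
    intros s; apply cplus; apply cmul; try apply cconst; apply cmul; auto.
    rewrite Hper; auto. }
  rewrite RInt_lin in Hsum by (apply ex_RInt_all; intros; apply cmul; auto).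
  fold (Pc gam dgam c) in Hsum.
  assert (Hdif : 0 < RInt (fun s => 1 * (fst (gam s) * snd (dgam s)) + (-1) * (snd (gam s) * fst (dgam s))) c (c + 2 * PI)).
  { apply RInt_gt_0. lra.
    intros x _. pose proof (Hccw x) as H1. unfold dot, rot in H1. simpl in H1. lra.
    intros x _. apply cplus; apply cmul; try apply cconst; apply cmul; auto. }
  rewrite RInt_lin in Hdif by (apply ex_RInt_all; intros; apply cmul; auto).
  fold (Pc gam dgam c) in Hdif.
  assert (H11 : RInt (fun s => 1 * (fst (gam s) * fst (dgam s)) + 1 * (fst (gam s) * fst (dgam s))) c (c + 2 * PI) = 0).
  { apply (per_deriv_int (fun s => fst (gam s) * fst (gam s))).
    intros s. eapply dval. apply mult_derive; apply fst_derive; auto. cbv beta; ring.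
    intros s; apply cplus; apply cmul; try apply cconst; apply cmul; auto.
    rewrite Hper; auto. }
  rewrite RInt_lin in H11 by (apply ex_RInt_all; intros; apply cmul; auto).
  assert (H22 : RInt (fun s => 1 * (snd (gam s) * snd (dgam s)) + 1 * (snd (gam s) * snd (dgam s))) c (c + 2 * PI) = 0).
  { apply (per_deriv_int (fun s => snd (gam s) * snd (gam s))).
    intros s. eapply dval. apply mult_derive; apply snd_derive; auto. cbv beta; ring.
    intros s; apply cplus; apply cmul; try apply cconst; apply cmul; auto.
    rewrite Hper; auto. }
  rewrite RInt_lin in H22 by (apply ex_RInt_all; intros; apply cmul; auto).
  split; [lra|split; [lra|split; lra]].
Qed.

Lemma lin3_derive (f1 f2 f3 : R -> R) (d1 d2 d3 a b t : R) :
  is_derive f1 t d1 -> is_derive f2 t d2 -> is_derive f3 t d3 ->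
  is_derive (fun s => f1 s + a * f2 s + b * f3 s) t (d1 + a * d2 + b * d3).
Proof.
  intros H1 H2 H3. apply is_derive_Reals in H1, H2, H3. apply is_derive_Reals.
  apply (derivable_pt_lim_plus (fun s => f1 s + a * f2 s) (fun s => b * f3 s)).
  apply (derivable_pt_lim_plus f1 (fun s => a * f2 s)). auto.
  apply (derivable_pt_lim_scal f2 a t d2 H2).
  apply (derivable_pt_lim_scal f3 b t d3 H3).
Qed.

Lemma dgam_per (gam dgam : R -> pt) : (forall t, gam (t + 2 * PI) = gam t) ->
  (forall t, is_derive gam t (dgam t)) -> forall t, dgam (t + 2 * PI) = dgam t.
Proof.
  intros Hper Hd t.
  rewrite (surjective_pairing (dgam (t + 2 * PI))), (surjective_pairing (dgam t)).
  f_equal.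
  apply (deriv_periodic (fun s => fst (gam s)) (fun s => fst (dgam s))).
  intros s; rewrite Hper; auto. apply fst_derive; auto.
  apply (deriv_periodic (fun s => snd (gam s)) (fun s => snd (dgam s))).
  intros s; rewrite Hper; auto. apply snd_derive; auto.
Qed.

Lemma lamf_C1 (gam dgam : R -> pt) c th1 eta :
  (forall t, gam (t + 2 * PI) = gam t) ->
  (forall t, is_derive gam t (dgam t)) -> (forall t, continuous dgam t) ->
  0 < eta -> 4 * eta <= th1 - c -> c < th1 < c + 2 * PI ->
  C1_periodic (lamf gam dgam c th1 eta) /\ (forall s, continuous (lamf gam dgam c th1 eta) s).
Proof.
  intros Hper Hd Hdc He H4 Hth.
  destruct (gam_facts gam dgam Hd Hdc) as [C1 [C2 [C3 C4]]].
  assert (D : forall t, is_derive (lamf gam dgam c th1 eta) t (dlamf gam dgam c th1 eta t) /\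
                        continuous (dlamf gam dgam c th1 eta) t).
  { intros t. destruct (lam0_C1 c th1 eta t He H4 ltac:(lra)) as [A B]. split.
    - unfold lamf, dlamf. apply lin3_derive; auto. apply fst_derive; auto. apply snd_derive; auto.
    - unfold dlamf. apply cplus. apply cplus. auto. apply cmul. apply cconst. auto. apply cmul. apply cconst. auto. }
  split. split.
  - intros t. unfold lamf. rewrite lam0_per, Hper. auto.
  - exists (dlamf gam dgam c th1 eta). auto.
  - intros s. apply (der_cont _ (dlamf gam dgam c th1 eta s)). apply D.
Qed.

Lemma GG_deriv (gam dgam : R -> pt) c th1 eta (pr : pt -> R) :
  (forall t, gam (t + 2 * PI) = gam t) ->
  (forall t, is_derive gam t (dgam t)) -> (forall t, continuous dgam t) ->
  0 < eta -> 4 * eta <= th1 - c -> c < th1 < c + 2 * PI ->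
  (forall x, continuous (fun s => pr (dgam s)) x) ->
  forall t, is_derive (GG gam dgam c th1 eta pr) t (lamf gam dgam c th1 eta t * pr (dgam t)).
Proof.
  intros Hper Hd Hdc He H4 Hth Hpr t.
  destruct (lamf_C1 gam dgam c th1 eta Hper Hd Hdc He H4 Hth) as [_ Hl].
  unfold GG. apply (cont_is_RInt (fun s => lamf gam dgam c th1 eta s * pr (dgam s))).
  intros x. apply cmul; auto.
Qed.

Lemma GG_split (gam dgam : R -> pt) c th1 eta (pr : pt -> R) t :
  (forall t, gam (t + 2 * PI) = gam t) ->
  (forall t, is_derive gam t (dgam t)) -> (forall t, continuous dgam t) ->
  0 < eta -> 4 * eta <= th1 - c -> c < th1 < c + 2 * PI ->
  (forall x, continuous (fun s => pr (dgam s)) x) ->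
  c <= t <= c + 2 * PI ->
  GG gam dgam c th1 eta pr t =
    RInt (fun s => mm c th1 eta s * pr (dgam s)) c t
    + ca gam dgam c th1 eta * RInt (fun s => fst (gam s) * pr (dgam s)) c t
    + cb gam dgam c th1 eta * RInt (fun s => snd (gam s) * pr (dgam s)) c t.
Proof.
  intros Hper Hd Hdc He H4 Hth Hpr Ht.
  destruct (gam_facts gam dgam Hd Hdc) as [C1 [C2 [C3 C4]]].
  set (A := ca gam dgam c th1 eta). set (B := cb gam dgam c th1 eta).
  unfold GG.
  rewrite (RInt_ext _ (fun s => 1 * (mm c th1 eta s * pr (dgam s)) + 1 * (A * (fst (gam s) * pr (dgam s)) + B * (snd (gam s) * pr (dgam s))))).
  rewrite RInt_lin. rewrite RInt_lin. ring.
  apply ex_RInt_all; intros; apply cmul; auto.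
  apply ex_RInt_all; intros; apply cmul; auto.
  apply ex_RInt_all; intros; apply cmul; auto. apply mm_cont.
  apply ex_RInt_all; intros; apply cplus; apply cmul; try apply cconst; apply cmul; auto.
  intros x Hx. rewrite Rmin_left, Rmax_right in Hx by lra.
  unfold lamf, lam0. rewrite rr_id by lra. fold A B. rring.
Qed.

Lemma GG_total (gam dgam : R -> pt) c th1 eta :
  (forall t, gam (t + 2 * PI) = gam t) ->
  (forall t, is_derive gam t (dgam t)) -> (forall t, continuous dgam t) ->
  (forall t, 0 < dot (dgam t) (rot (gam t))) ->
  0 < eta -> 4 * eta <= th1 - c -> c < th1 < c + 2 * PI ->
  GG gam dgam c th1 eta fst (c + 2 * PI) = 0 /\ GG gam dgam c th1 eta snd (c + 2 * PI) = 0.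
Proof.
  intros Hper Hd Hdc Hccw He H4 Hth. pose proof PI_RGT_0.
  destruct (gam_facts gam dgam Hd Hdc) as [C1 [C2 [C3 C4]]].
  destruct (Pc_pos gam dgam c Hper Hd Hdc Hccw) as [P0 [P21 [P11 P22]]].
  split.
  - rewrite (GG_split gam dgam c th1 eta fst (c + 2 * PI)); auto; try lra.
    rewrite P11, P21. fold (Tc dgam c th1 eta fst). unfold ca, cb. field. lra.
  - rewrite (GG_split gam dgam c th1 eta snd (c + 2 * PI)); auto; try lra.
    rewrite P22. change (RInt (fun s : R => fst (gam s) * snd (dgam s)) c (c + 2 * PI)) with (Pc gam dgam c).
    change (RInt (fun s : R => mm c th1 eta s * snd (dgam s)) c (c + 2 * PI)) with (Tc dgam c th1 eta snd). unfold ca, cb. field. lra.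
Qed.

Lemma GG_per (gam dgam : R -> pt) c th1 eta (pr : pt -> R) :
  (forall t, gam (t + 2 * PI) = gam t) ->
  (forall t, is_derive gam t (dgam t)) -> (forall t, continuous dgam t) ->
  0 < eta -> 4 * eta <= th1 - c -> c < th1 < c + 2 * PI ->
  (forall x, continuous (fun s => pr (dgam s)) x) ->
  GG gam dgam c th1 eta pr (c + 2 * PI) = 0 ->
  forall t, GG gam dgam c th1 eta pr (t + 2 * PI) = GG gam dgam c th1 eta pr t.
Proof.
  intros Hper Hd Hdc He H4 Hth Hpr Htot.
  destruct (lamf_C1 gam dgam c th1 eta Hper Hd Hdc He H4 Hth) as [[Hlp _] _].
  set (G := GG gam dgam c th1 eta pr).
  assert (HD : forall t, is_derive (fun t => G (t + 2 * PI) * 1 + G t * (-1)) t 0).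
  { intros t. eapply dval. apply (lin_derive (fun t => G (t + 2 * PI)) G).
    apply shift_derive. apply GG_deriv; auto. apply GG_deriv; auto.
    rewrite Hlp, (dgam_per gam dgam Hper Hd). ring. }
  intros t. pose proof (const_zero_deriv _ HD t c) as E. cbv beta in E.
  assert (G0 : G c = 0).
  { unfold G, GG. rewrite RInt_point. reflexivity. }
  fold G in Htot. rewrite Htot, G0 in E. lra.
Qed.

Lemma cont_eps (w : R -> R) p : continuous w p -> forall eps, 0 < eps ->
  exists d, 0 < d /\ forall x, Rabs (x - p) < d -> Rabs (w x - w p) < eps.
Proof.
  intros H eps He. apply continuity_pt_filterlim in H.
  destruct (H eps He) as [d [Hd Hx]]. exists d. split; auto.
  intros x Hxp. destruct (Req_dec x p) as [E|E]. subst. rewrite Rminus_diag, Rabs_R0. auto.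
  apply (Hx x). split. split. exact I. auto. exact Hxp.
Qed.

Lemma U_int c th1 eta : 0 < eta -> 4 * eta <= th1 - c ->
  RInt (mm c th1 eta) (c + eta) (c + 2 * eta) = 1.
Proof.
  intros He H4.
  pose proof (is_RInt_derive (V:=R_CompleteNormedModule) (fun x => Bq eta (x + - (c + eta))) (mm c th1 eta) (c + eta) (c + 2 * eta)) as H.
  apply is_RInt_unique in H. rewrite H.
  replace (c + 2 * eta + - (c + eta)) with eta by ring. replace (c + eta + - (c + eta)) with 0 by ring.
  rewrite Bq_eta, Bq_0 by auto. unfold minus, plus, opp; simpl. ring.
  intros x Hx. rewrite Rmin_left, Rmax_right in Hx by lra.
  rewrite mm_U by (auto; lra). replace (x - c - eta) with (x + - (c + eta)) by ring.
  apply shift_derive. apply Bq_derive; auto. lra.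
  intros x _. apply mm_cont.
Qed.

Lemma V_int c th1 eta : 0 < eta -> 4 * eta <= th1 - c ->
  RInt (mm c th1 eta) (th1 - 2 * eta) (th1 - eta) = 1.
Proof.
  intros He H4.
  pose proof (is_RInt_derive (V:=R_CompleteNormedModule) (fun x => - Bq eta (th1 - eta - x)) (mm c th1 eta) (th1 - 2 * eta) (th1 - eta)) as H.
  apply is_RInt_unique in H. rewrite H.
  replace (th1 - eta - (th1 - eta)) with 0 by ring. replace (th1 - eta - (th1 - 2 * eta)) with eta by ring.
  rewrite Bq_eta, Bq_0 by auto. unfold minus, plus, opp; simpl. ring.
  intros x Hx. rewrite Rmin_left, Rmax_right in Hx by lra.
  rewrite mm_V by (auto; lra).
  replace (bq eta (th1 - eta - x)) with (- (scal (opp 1) (bq eta (th1 - eta - x)))).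
  apply opp_derive. apply (is_derive_comp (Bq eta) (fun x => th1 - eta - x)). apply Bq_derive; auto. lra.
  auto_derive; auto.
  unfold scal; simpl. unfold mult; simpl. unfold opp; simpl. unfold one. simpl. ring.
  intros x _. apply mm_cont.
Qed.

Lemma Msplit c th1 eta (w : R -> R) t : 0 < eta -> 4 * eta <= th1 - c ->
  (forall x, continuous w x) ->
  (c <= t <= c + eta -> RInt (fun s => mm c th1 eta s * w s) c t = 0) /\
  (c + 2 * eta <= t <= th1 - 2 * eta -> RInt (fun s => mm c th1 eta s * w s) c t =
       RInt (fun s => mm c th1 eta s * w s) (c + eta) (c + 2 * eta)) /\
  (th1 - eta <= t -> RInt (fun s => mm c th1 eta s * w s) c t =
       RInt (fun s => mm c th1 eta s * w s) (c + eta) (c + 2 * eta) +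
       RInt (fun s => mm c th1 eta s * w s) (th1 - 2 * eta) (th1 - eta)).
Proof.
  intros He H4 Hw.
  set (f := fun s => mm c th1 eta s * w s).
  assert (Hf : forall x, continuous f x) by (intros; apply cmul; auto; apply mm_cont).
  assert (Z1 : forall a b, c <= a -> b <= c + eta -> a <= b -> RInt f a b = 0).
  { intros a b Ha Hb Hab. apply RInt_zero_on. intros x Hx. rewrite Rmin_left, Rmax_right in Hx by lra.
    unfold f. rewrite (proj1 (mm_zero c th1 eta x He H4 ltac:(lra))). ring. }
  assert (Z2 : forall a b, c + 2 * eta <= a -> b <= th1 - 2 * eta -> a <= b -> RInt f a b = 0).
  { intros a b Ha Hb Hab. apply RInt_zero_on. intros x Hx. rewrite Rmin_left, Rmax_right in Hx by lra.
    unfold f. rewrite (mm_mid c th1 eta x He H4 ltac:(lra)). ring. }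
  assert (Z3 : forall a b, th1 - eta <= a -> a <= b -> RInt f a b = 0).
  { intros a b Ha Hab. apply RInt_zero_on. intros x Hx. rewrite Rmin_left, Rmax_right in Hx by lra.
    unfold f. rewrite (proj1 (mm_zero c th1 eta x He H4 ltac:(lra))). ring. }
  assert (B : forall t, c + 2 * eta <= t <= th1 - 2 * eta -> RInt f c t = RInt f (c + eta) (c + 2 * eta)).
  { intros t0 Ht. rewrite <- (RChasles f c (c + eta) t0 Hf), <- (RChasles f (c + eta) (c + 2 * eta) t0 Hf).
    rewrite Z1, (Z2 (c + 2 * eta) t0) by lra. rring. }
  split; [|split].
  - intros Ht. apply Z1; lra.
  - apply B.
  - intros Ht. change (@eq R (RInt f c t) (RInt f (c + eta) (c + 2 * eta) + RInt f (th1 - 2 * eta) (th1 - eta))). rewrite <- (RChasles f c (th1 - 2 * eta) t Hf), <- (RChasles f (th1 - 2 * eta) (th1 - eta) t Hf).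
    rewrite (B (th1 - 2 * eta)) by lra. rewrite (Z3 (th1 - eta) t) by lra. rring.
Qed.

Lemma U_lim c th1 (w : R -> R) : (forall x, continuous w x) ->
  forall eps, 0 < eps -> exists d0, 0 < d0 /\ forall eta, 0 < eta -> eta < d0 -> 4 * eta <= th1 - c ->
    Rabs (RInt (fun s => mm c th1 eta s * w s) (c + eta) (c + 2 * eta) - w c) <= eps.
Proof.
  intros Hw eps He.
  destruct (cont_eps w c (Hw c) eps He) as [d [Hd Hx]].
  exists (d / 2). split. lra. intros eta H0 H1 H4.
  apply avg_close; auto. lra. intros; apply mm_cont. intros; apply mm_ge0; auto.
  apply U_int; auto.
  intros s Hs. left. apply Hx. apply Rabs_lt_between. lra.
Qed.

Lemma V_lim c th1 (w : R -> R) : (forall x, continuous w x) ->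
  forall eps, 0 < eps -> exists d0, 0 < d0 /\ forall eta, 0 < eta -> eta < d0 -> 4 * eta <= th1 - c ->
    Rabs (RInt (fun s => mm c th1 eta s * w s) (th1 - 2 * eta) (th1 - eta) - w th1) <= eps.
Proof.
  intros Hw eps He.
  destruct (cont_eps w th1 (Hw th1) eps He) as [d [Hd Hx]].
  exists (d / 2). split. lra. intros eta H0 H1 H4.
  apply avg_close; auto. lra. intros; apply mm_cont. intros; apply mm_ge0; auto.
  apply V_int; auto.
  intros s Hs. left. apply Hx. apply Rabs_lt_between. lra.
Qed.

Lemma M_bound c th1 eta (w : R -> R) t : 0 < eta -> 4 * eta <= th1 - c -> th1 < c + 2 * PI ->
  (forall x, continuous w x) -> (forall x, Rabs (w x) <= 1) -> c <= t <= c + 2 * PI ->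
  Rabs (RInt (fun s => mm c th1 eta s * w s) c t) <= 2.
Proof.
  intros He H4 Hth Hw Hw1 Ht.
  assert (Hm : forall x, continuous (mm c th1 eta) x) by (intros; apply mm_cont).
  eapply Rle_trans. apply abs_RInt_le. lra. apply ex_RInt_all. intros; apply cmul; auto.
  apply Rle_trans with (RInt (fun s => mm c th1 eta s * 1) c t).
  apply RInt_le. lra. apply ex_RInt_all. intros; apply cabs; apply cmul; auto.
  apply ex_RInt_all. intros; apply cmul; auto. apply cconst.
  intros x _. rewrite Rabs_mult, Rabs_right by (apply Rle_ge, mm_ge0; auto).
  apply Rmult_le_compat_l. apply mm_ge0; auto. auto.
  assert (Hc1 : forall x, continuous (fun s => mm c th1 eta s * 1) x) by (intros; apply cmul; auto; apply cconst).
  rewrite <- (Rplus_0_r (RInt _ c t)).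
  apply Rle_trans with (RInt (fun s => mm c th1 eta s * 1) c t + RInt (fun s => mm c th1 eta s * 1) t (c + 2 * PI)).
  apply Rplus_le_compat_l. apply RInt_ge_0. lra. apply ex_RInt_all; auto.
  intros; rewrite Rmult_1_r; apply mm_ge0; auto.
  rewrite RChasles by auto.
  destruct (Msplit c th1 eta (fun _ => 1) (c + 2 * PI) He H4 (fun x => cconst 1 x)) as [_ [_ M3]].
  rewrite M3 by lra.
  rewrite (RInt_ext (fun s => mm c th1 eta s * 1) (mm c th1 eta)) by (intros; apply Rmult_1_r).
  rewrite (RInt_ext (fun s => mm c th1 eta s * 1) (mm c th1 eta)) by (intros; apply Rmult_1_r).
  rewrite U_int, V_int by auto. lra.
Qed.

Lemma pair_lim (X1 X2 : R -> R) L1 L2 :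
  (forall eps, 0 < eps -> exists del, 0 < del /\ forall d, 0 < d < del -> Rabs (X1 d - L1) < eps) ->
  (forall eps, 0 < eps -> exists del, 0 < del /\ forall d, 0 < d < del -> Rabs (X2 d - L2) < eps) ->
  filterlim (fun d => (X1 d, X2 d)) (at_right 0) (locally (L1, L2)).
Proof.
  intros H1 H2. apply filterlim_locally. intros eps.
  destruct (H1 eps (cond_pos eps)) as [d1 [Hd1 K1]].
  destruct (H2 eps (cond_pos eps)) as [d2 [Hd2 K2]].
  assert (Hm : 0 < Rmin d1 d2) by (apply Rmin_pos; auto).
  exists (mkposreal _ Hm). intros y Hy Hy0. simpl in Hy.
  unfold ball in Hy; simpl in Hy. unfold AbsRing_ball, abs, minus, plus, opp in Hy; simpl in Hy.
  rewrite Ropp_0, Rplus_0_r in Hy.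
  rewrite Rabs_right in Hy by lra.
  assert (y < d1) by (eapply Rlt_le_trans; [exact Hy| apply Rmin_l]).
  assert (y < d2) by (eapply Rlt_le_trans; [exact Hy| apply Rmin_r]).
  split; unfold ball; simpl; unfold AbsRing_ball, abs, minus, plus, opp; simpl.
  apply K1; lra. apply K2; lra.
Qed.

Lemma bound_cont (f : R -> R) a b : a <= b -> (forall x, continuous f x) ->
  exists C, 0 <= C /\ forall t, a <= t <= b -> Rabs (f t) <= C.
Proof.
  intros Hab Hf.
  destruct (continuity_ab_maj (fun t => Rabs (f t)) a b Hab) as [Mx [HM _]].
  intros x _. apply continuity_pt_filterlim. apply cabs. auto.
  exists (Rabs (f Mx)). split. apply Rabs_pos. auto.
Qed.

Lemma abs_le1 x y : x * x + y * y = 1 -> Rabs x <= 1.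
Proof.
  intros H. unfold Rabs. destruct (Rcase_abs x); nra.
Qed.

Lemma tri3 m a b A B : Rabs (m + a * A + b * B) <= Rabs m + Rabs a * Rabs A + Rabs b * Rabs B.
Proof.
  eapply Rle_trans. apply Rabs_triang. rewrite Rabs_mult.
  apply Rplus_le_compat_r. eapply Rle_trans. apply Rabs_triang. rewrite Rabs_mult. lra.
Qed.

Lemma div_bound T P B : 0 < P -> Rabs T <= B -> Rabs (T / P) <= B / P /\ Rabs (- T / P) <= B / P.
Proof.
  intros HP HT. unfold Rdiv. rewrite !Rabs_mult, Rabs_Ropp, Rabs_inv, (Rabs_right P) by lra.
  split; apply Rmult_le_compat_r; try lra; left; apply Rinv_0_lt_compat; lra.
Qed.

Lemma coef_small (gam dgam : R -> pt) c th1 :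
  (forall t, gam (t + 2 * PI) = gam t) ->
  (forall t, is_derive gam t (dgam t)) -> (forall t, continuous dgam t) ->
  (forall t, 0 < dot (dgam t) (rot (gam t))) -> c < th1 < c + 2 * PI ->
  fst (dgam th1) = - fst (dgam c) -> snd (dgam th1) = - snd (dgam c) ->
  forall e, 0 < e -> exists del, 0 < del /\ forall eta, 0 < eta -> eta < del -> 4 * eta <= th1 - c ->
    Rabs (ca gam dgam c th1 eta) <= 2 * e / Pc gam dgam c /\
    Rabs (cb gam dgam c th1 eta) <= 2 * e / Pc gam dgam c.
Proof.
  intros Hper Hd Hdc Hccw Hth Ef1 Ef2 e He.
  destruct (gam_facts gam dgam Hd Hdc) as [C1 [C2 [C3 C4]]].
  destruct (Pc_pos gam dgam c Hper Hd Hdc Hccw) as [P0 _].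
  destruct (U_lim c th1 _ C3 e He) as [u1 [Hu1 KU1]].
  destruct (U_lim c th1 _ C4 e He) as [u2 [Hu2 KU2]].
  destruct (V_lim c th1 _ C3 e He) as [v1 [Hv1 KV1]].
  destruct (V_lim c th1 _ C4 e He) as [v2 [Hv2 KV2]].
  exists (Rmin (Rmin u1 u2) (Rmin v1 v2)). split.
  apply Rmin_pos; apply Rmin_pos; auto.
  intros eta H0 H1 H4.
  assert (eta < u1 /\ eta < u2 /\ eta < v1 /\ eta < v2) as [A1 [A2 [A3 A4]]].
  { pose proof (Rmin_l (Rmin u1 u2) (Rmin v1 v2)). pose proof (Rmin_r (Rmin u1 u2) (Rmin v1 v2)).
    pose proof (Rmin_l u1 u2). pose proof (Rmin_r u1 u2). pose proof (Rmin_l v1 v2). pose proof (Rmin_r v1 v2).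
    repeat split; lra. }
  specialize (KU1 eta H0 A1 H4). specialize (KU2 eta H0 A2 H4).
  specialize (KV1 eta H0 A3 H4). specialize (KV2 eta H0 A4 H4).
  cbv beta in KU1, KU2, KV1, KV2. rewrite Ef1 in KV1. rewrite Ef2 in KV2.
  pose proof PI_RGT_0.
  destruct (Msplit c th1 eta (fun s => fst (dgam s)) (c + 2 * PI) H0 H4 C3) as [_ [_ M1]].
  destruct (Msplit c th1 eta (fun s => snd (dgam s)) (c + 2 * PI) H0 H4 C4) as [_ [_ M2]].
  specialize (M1 ltac:(lra)). specialize (M2 ltac:(lra)).
  assert (T1 : Rabs (Tc dgam c th1 eta fst) <= 2 * e).
  { unfold Tc. rewrite M1.
    apply Rabs_le_between in KU1. apply Rabs_le_between in KV1. apply Rabs_le_between. lra. }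
  assert (T2 : Rabs (Tc dgam c th1 eta snd) <= 2 * e).
  { unfold Tc. rewrite M2.
    apply Rabs_le_between in KU2. apply Rabs_le_between in KV2. apply Rabs_le_between. lra. }
  unfold ca, cb. split.
  apply (div_bound _ _ _ P0 T2). apply (div_bound _ _ _ P0 T1).
Qed.

Lemma comp_conv (gam dgam : R -> pt) c th1 (pr : pt -> R) t L :
  (forall t, gam (t + 2 * PI) = gam t) ->
  (forall t, is_derive gam t (dgam t)) -> (forall t, continuous dgam t) ->
  (forall t, 0 < dot (dgam t) (rot (gam t))) -> c < th1 < c + 2 * PI ->
  fst (dgam th1) = - fst (dgam c) -> snd (dgam th1) = - snd (dgam c) ->
  (forall x, continuous (fun s => pr (dgam s)) x) ->
  pr (dgam th1) = - pr (dgam c) ->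
  c <= t < c + 2 * PI ->
  ((c < t < th1 /\ L = pr (dgam c)) \/ (t = c /\ L = 0) \/ (th1 <= t /\ L = 0)) ->
  forall eps, 0 < eps -> exists del, 0 < del /\ forall d, 0 < d < del ->
    Rabs (GG gam dgam c th1 (Rmin d ((th1 - c) / 4)) pr t - L) < eps.
Proof.
  intros Hper Hd Hdc Hccw Hth Ef1 Ef2 Hpr Hprt Ht Hreg eps Heps.
  pose proof PI_RGT_0.
  destruct (gam_facts gam dgam Hd Hdc) as [C1 [C2 [C3 C4]]].
  destruct (Pc_pos gam dgam c Hper Hd Hdc Hccw) as [P0 _].
  set (P := Pc gam dgam c) in *.
  set (D := (th1 - c) / 4).
  assert (HD : 0 < D) by (unfold D; lra).
  destruct Hreg as [[Hr HL]|[[Hr HL]|[Hr HL]]].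
  2: { exists 1. split. lra. intros d _. subst t L. unfold GG. rewrite RInt_point.
       change (Rabs (0 - 0) < eps). rewrite Rminus_0_r, Rabs_R0. auto. }
  all: set (A1 := RInt (fun s => fst (gam s) * pr (dgam s)) c t).
  all: set (A2 := RInt (fun s => snd (gam s) * pr (dgam s)) c t).
  all: set (K := 1 + (Rabs A1 + Rabs A2) / P).
  all: assert (HK : 1 <= K) by (unfold K; assert (0 <= (Rabs A1 + Rabs A2) / P)
          by (apply Rdiv_le_0_compat; [pose proof (Rabs_pos A1); pose proof (Rabs_pos A2); lra | lra]); lra).
  all: set (e := eps / (4 * K)).
  all: assert (He : 0 < e) by (unfold e; apply Rdiv_lt_0_compat; lra).
  all: destruct (coef_small gam dgam c th1 Hper Hd Hdc Hccw Hth Ef1 Ef2 e He) as [d1 [Hd1 KC]].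
  all: destruct (U_lim c th1 _ Hpr e He) as [du [Hdu KU]].
  all: destruct (V_lim c th1 _ Hpr e He) as [dv [Hdv KV]].
  all: assert (FIN : forall eta M, 0 < eta -> 4 * eta <= th1 - c -> Rabs (M - L) <= 2 * e ->
          Rabs (ca gam dgam c th1 eta) <= 2 * e / P -> Rabs (cb gam dgam c th1 eta) <= 2 * e / P ->
          Rabs (M + ca gam dgam c th1 eta * A1 + cb gam dgam c th1 eta * A2 - L) < eps).
  all: try (intros eta M He0 H4 HM Ha Hb;
    replace (M + ca gam dgam c th1 eta * A1 + cb gam dgam c th1 eta * A2 - L)
      with ((M - L) + ca gam dgam c th1 eta * A1 + cb gam dgam c th1 eta * A2) by ring;
    eapply Rle_lt_trans; [apply tri3|];
    apply Rle_lt_trans with (2 * e + 2 * e / P * Rabs A1 + 2 * e / P * Rabs A2);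
    [apply Rplus_le_compat; [apply Rplus_le_compat; [auto| apply Rmult_le_compat_r; [apply Rabs_pos| auto]] |
       apply Rmult_le_compat_r; [apply Rabs_pos| auto]] |];
    replace (2 * e + 2 * e / P * Rabs A1 + 2 * e / P * Rabs A2) with (2 * e * K) by (unfold K; field; lra);
    unfold e; replace (2 * (eps / (4 * K)) * K) with (eps / 2) by (field; lra); lra).
  -
    set (r := Rmin ((t - c) / 2) ((th1 - t) / 2)).
    assert (Hrp : 0 < r) by (unfold r; apply Rmin_pos; lra).
    exists (Rmin (Rmin d1 (Rmin du dv)) (Rmin D r)). split.
    apply Rmin_pos. repeat apply Rmin_pos; auto. apply Rmin_pos; auto.
    intros d Hdd.
    assert (B : d < d1 /\ d < du /\ d < dv /\ d < D /\ d < r).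
    { pose proof (Rmin_l (Rmin d1 (Rmin du dv)) (Rmin D r)). pose proof (Rmin_r (Rmin d1 (Rmin du dv)) (Rmin D r)).
      pose proof (Rmin_l d1 (Rmin du dv)). pose proof (Rmin_r d1 (Rmin du dv)).
      pose proof (Rmin_l du dv). pose proof (Rmin_r du dv). pose proof (Rmin_l D r). pose proof (Rmin_r D r).
      repeat split; lra. }
    destruct B as [B1 [B2 [B3 [B4 B5]]]].
    assert (r <= (t - c) / 2) by apply Rmin_l. assert (r <= (th1 - t) / 2) by apply Rmin_r.
    rewrite (Rmin_left d D) by lra. fold D.
    assert (H4 : 4 * d <= th1 - c) by (unfold D in B4; lra).
    rewrite (GG_split gam dgam c th1 d pr t) by (auto; lra).
    destruct (Msplit c th1 d (fun s => pr (dgam s)) t (proj1 Hdd) H4 Hpr) as [_ [M2 _]].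
    rewrite M2 by lra. fold A1 A2.
    destruct (KC d (proj1 Hdd) B1 H4) as [Ka Kb].
    apply (FIN d); auto. lra.
    rewrite HL. specialize (KU d (proj1 Hdd) B2 H4). lra.
  -
    exists (Rmin (Rmin d1 (Rmin du dv)) D). split.
    repeat apply Rmin_pos; auto.
    intros d Hdd.
    assert (B : d < d1 /\ d < du /\ d < dv /\ d < D).
    { pose proof (Rmin_l (Rmin d1 (Rmin du dv)) D). pose proof (Rmin_r (Rmin d1 (Rmin du dv)) D).
      pose proof (Rmin_l d1 (Rmin du dv)). pose proof (Rmin_r d1 (Rmin du dv)).
      pose proof (Rmin_l du dv). pose proof (Rmin_r du dv).
      repeat split; lra. }
    destruct B as [B1 [B2 [B3 B4]]].
    rewrite (Rmin_left d D) by lra. fold D.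
    assert (H4 : 4 * d <= th1 - c) by (unfold D in B4; lra).
    rewrite (GG_split gam dgam c th1 d pr t) by (auto; lra).
    destruct (Msplit c th1 d (fun s => pr (dgam s)) t (proj1 Hdd) H4 Hpr) as [_ [_ M3]].
    rewrite M3 by lra. fold A1 A2.
    destruct (KC d (proj1 Hdd) B1 H4) as [Ka Kb].
    apply (FIN d); auto. lra.
    specialize (KU d (proj1 Hdd) B2 H4). specialize (KV d (proj1 Hdd) B3 H4).
    cbv beta in KU, KV. rewrite Hprt in KV. rewrite HL.
    apply Rabs_le_between in KU. apply Rabs_le_between in KV. apply Rabs_le_between. lra.
Qed.

Theorem lemma3p3 (N : pt -> R) (gam dgam : R -> pt) (theta0 : R) :
  is_norm N -> strictly_convex N -> C1_away_from_0 N ->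
  arclength_param N gam dgam ->
  exists Phid : R -> pt -> pt,
    (forall d, 0 < d -> ENT gam dgam (Phid d)) /\
    (exists M : R, forall d z, 0 < d -> N z = 1 ->
        Rabs (fst (Phid d z)) <= M /\ Rabs (snd (Phid d z)) <= M) /\
    (forall z, N z = 1 ->
        filterlim (fun d => Phid d z) (at_right 0) (locally (Phi_xi gam dgam theta0 z))).
Proof.
  intros Hn Hsc HC1 Harc.
  destruct (geometry N gam dgam theta0 Hn HC1 Harc) as [th1 [Hth [Hth1 [Hpos [Hneg [Ef1 Ef2]]]]]].
  destruct Harc as [Hper [Hd [Hdc [Hunit [Hsph [Hinj Hccw]]]]]].
  set (c := theta0) in *.
  pose proof PI_RGT_0 as HPI.
  destruct (gam_facts gam dgam Hd Hdc) as [Cg1 [Cg2 [Cd1 Cd2]]].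
  set (D := (th1 - c) / 4).
  assert (HD : 0 < D) by (unfold D; lra).
  set (tau := fun z => epsilon (inhabits 0) (fun t => gam t = z)).
  assert (Het : forall d, 0 < d -> 0 < Rmin d D /\ 4 * Rmin d D <= th1 - c).
  { intros d Hd0. split. apply Rmin_pos; auto. pose proof (Rmin_r d D) as HH. unfold D in *. lra. }
  set (F := fun d pr t => GG gam dgam c th1 (Rmin d D) pr t).
  assert (KEY : forall d, 0 < d -> forall s, F d fst (tau (gam s)) = F d fst s /\ F d snd (tau (gam s)) = F d snd s).
  { intros d Hd0 s. destruct (Het d Hd0) as [E1 E2].
    assert (Ht : gam (tau (gam s)) = gam s).
    { apply (epsilon_spec (inhabits 0) (fun t => gam t = gam s)). exists s; auto. }
    destruct (Hinj _ _ Ht) as [k Hk].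
    replace (tau (gam s)) with (s + 2 * PI * IZR k) by lra.
    destruct (GG_total gam dgam c th1 (Rmin d D) Hper Hd Hdc Hccw E1 E2 Hth) as [T1 T2].
    unfold F. split.
    apply (periodic_Z (GG gam dgam c th1 (Rmin d D) fst) (2 * PI)).
    apply GG_per; auto.
    apply (periodic_Z (GG gam dgam c th1 (Rmin d D) snd) (2 * PI)).
    apply GG_per; auto. }
  assert (REP : forall z, N z = 1 -> exists t, c <= t < c + 2 * PI /\ gam t = z /\
             forall d, 0 < d -> F d fst (tau z) = F d fst t /\ F d snd (tau z) = F d snd t).
  { intros z Hz. destruct (proj1 (Hsph z) Hz) as [t0 Ht0].
    exists (rr c t0). destruct (rr_range c t0) as [R1 R2].
    assert (Eg : gam (rr c t0) = z).
    { destruct (rr_shift c t0) as [k Hk]. rewrite Hk, (periodic_Z_gen gam (2 * PI) Hper k t0). auto. }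
    split. lra. split. auto. intros d Hd0. rewrite <- Eg. apply KEY; auto. }
  exists (fun d z => (F d fst (tau z), F d snd (tau z))).
  split; [|split].
  -
    intros d Hd0. destruct (Het d Hd0) as [E1 E2].
    exists (lamf gam dgam c th1 (Rmin d D)). split.
    apply (lamf_C1 gam dgam c th1 (Rmin d D) Hper Hd Hdc E1 E2 Hth).
    intros t.
    apply is_derive_ext with (f := fun s => (F d fst s, F d snd s)).
    { intros s. destruct (KEY d Hd0 s) as [K1 K2]. rewrite K1, K2. reflexivity. }
    apply is_derive_pair_; unfold F.
    apply (GG_deriv gam dgam c th1 (Rmin d D) fst Hper Hd Hdc E1 E2 Hth Cd1).
    apply (GG_deriv gam dgam c th1 (Rmin d D) snd Hper Hd Hdc E1 E2 Hth Cd2).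
  -
    destruct (Pc_pos gam dgam c Hper Hd Hdc Hccw) as [P0 _].
    set (P := Pc gam dgam c) in *.
    assert (Cb : forall (f1 f2 : R -> R), (forall x, continuous f1 x) -> (forall x, continuous f2 x) ->
               exists C, 0 <= C /\ forall t, c <= t <= c + 2 * PI -> Rabs (RInt (fun s => f1 s * f2 s) c t) <= C).
    { intros f1 f2 H1 H2. apply bound_cont. lra. intros x.
      apply (der_cont _ (f1 x * f2 x)). apply (cont_is_RInt (fun s => f1 s * f2 s)). intros; apply cmul; auto. }
    destruct (Cb _ _ Cg1 Cd1) as [C11 [HC11 K11]].
    destruct (Cb _ _ Cg2 Cd1) as [C21 [HC21 K21]].
    destruct (Cb _ _ Cg1 Cd2) as [C12 [HC12 K12]].
    destruct (Cb _ _ Cg2 Cd2) as [C22 [HC22 K22]].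
    assert (U1 : forall x, Rabs (fst (dgam x)) <= 1).
    { intros x. apply (abs_le1 _ (snd (dgam x))). apply Hunit. }
    assert (U2 : forall x, Rabs (snd (dgam x)) <= 1).
    { intros x. apply (abs_le1 _ (fst (dgam x))). pose proof (Hunit x). unfold dot in H. lra. }
    exists (2 + 2 / P * (C11 + C21 + C12 + C22)).
    intros d z Hd0 Hz. destruct (Het d Hd0) as [E1 E2].
    destruct (REP z Hz) as [t [Ht [Egt Ft]]]. destruct (Ft d Hd0) as [Ft1 Ft2].
    cbv beta. rewrite Ft1, Ft2. unfold F.
    assert (Ta : Rabs (ca gam dgam c th1 (Rmin d D)) <= 2 / P).
    { apply (div_bound _ _ _ P0). apply M_bound; auto. lra. lra. }
    assert (Tb : Rabs (cb gam dgam c th1 (Rmin d D)) <= 2 / P).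
    { apply (div_bound _ _ _ P0). apply M_bound; auto. lra. lra. }
    assert (HP2 : 0 <= 2 / P) by (apply Rdiv_le_0_compat; lra).
    split.
    + rewrite (GG_split gam dgam c th1 (Rmin d D) fst t) by (auto; lra).
      eapply Rle_trans. apply tri3.
      assert (Rabs (RInt (fun s => mm c th1 (Rmin d D) s * fst (dgam s)) c t) <= 2) by (apply M_bound; auto; lra).
      assert (Rabs (ca gam dgam c th1 (Rmin d D)) * Rabs (RInt (fun s => fst (gam s) * fst (dgam s)) c t) <= 2 / P * C11).
      { apply Rmult_le_compat; auto using Rabs_pos. apply K11; lra. }
      assert (Rabs (cb gam dgam c th1 (Rmin d D)) * Rabs (RInt (fun s => snd (gam s) * fst (dgam s)) c t) <= 2 / P * C21).
      { apply Rmult_le_compat; auto using Rabs_pos. apply K21; lra. }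
      assert (0 <= 2 / P * C12) by (apply Rmult_le_pos; auto).
      assert (0 <= 2 / P * C22) by (apply Rmult_le_pos; auto).
      lra.
    + rewrite (GG_split gam dgam c th1 (Rmin d D) snd t) by (auto; lra).
      eapply Rle_trans. apply tri3.
      assert (Rabs (RInt (fun s => mm c th1 (Rmin d D) s * snd (dgam s)) c t) <= 2) by (apply M_bound; auto; lra).
      assert (Rabs (ca gam dgam c th1 (Rmin d D)) * Rabs (RInt (fun s => fst (gam s) * snd (dgam s)) c t) <= 2 / P * C12).
      { apply Rmult_le_compat; auto using Rabs_pos. apply K12; lra. }
      assert (Rabs (cb gam dgam c th1 (Rmin d D)) * Rabs (RInt (fun s => snd (gam s) * snd (dgam s)) c t) <= 2 / P * C22).
      { apply Rmult_le_compat; auto using Rabs_pos. apply K22; lra. }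
      assert (0 <= 2 / P * C11) by (apply Rmult_le_pos; auto).
      assert (0 <= 2 / P * C21) by (apply Rmult_le_pos; auto).
      lra.
  -
    intros z Hz. destruct (REP z Hz) as [t [Ht [Egt Ft]]].
    assert (Reg : (c < t < th1 /\ Phi_xi gam dgam c z = dgam c) \/
                  ((t = c \/ th1 <= t) /\ Phi_xi gam dgam c z = (0, 0))).
    { unfold Phi_xi. rewrite <- Egt. unfold dot, rot. simpl.
      destruct (Rlt_dec 0 (fst (gam t) * - snd (gam c) + snd (gam t) * fst (gam c))) as [Hl|Hl].
      - left. split; auto. split.
        destruct (Req_dec t c) as [E|E]. subst t. exfalso. lra. lra.
        destruct (Rlt_dec t th1); auto. exfalso. specialize (Hneg t ltac:(lra)). lra.
      - right. split; auto.
        destruct (Req_dec t c) as [E|E]. left; auto.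
        destruct (Rlt_dec t th1) as [Hl2|Hl2]. exfalso. apply Hl. apply Hpos. lra. right; lra. }
    assert (Hlim : forall L1 L2, Phi_xi gam dgam c z = (L1, L2) ->
       ((c < t < th1 /\ L1 = fst (dgam c)) \/ (t = c /\ L1 = 0) \/ (th1 <= t /\ L1 = 0)) ->
       ((c < t < th1 /\ L2 = snd (dgam c)) \/ (t = c /\ L2 = 0) \/ (th1 <= t /\ L2 = 0)) ->
       filterlim (fun d => (F d fst (tau z), F d snd (tau z))) (at_right 0) (locally (Phi_xi gam dgam c z))).
    { intros L1 L2 EL R1 R2. rewrite EL.
      apply pair_lim.
      - intros eps Heps.
        destruct (comp_conv gam dgam c th1 fst t L1 Hper Hd Hdc Hccw Hth Ef1 Ef2 Cd1 Ef1 Ht R1 eps Heps) as [del [Hdel K]].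
        exists del. split; auto. intros d Hdd. destruct (Ft d (proj1 Hdd)) as [F1 _]. rewrite F1. apply K; auto.
      - intros eps Heps.
        destruct (comp_conv gam dgam c th1 snd t L2 Hper Hd Hdc Hccw Hth Ef1 Ef2 Cd2 Ef2 Ht R2 eps Heps) as [del [Hdel K]].
        exists del. split; auto. intros d Hdd. destruct (Ft d (proj1 Hdd)) as [_ F2]. rewrite F2. apply K; auto. }
    destruct Reg as [[Hr E]|[[Hr|Hr] E]].
    + apply (Hlim (fst (dgam c)) (snd (dgam c))). rewrite E. apply surjective_pairing.
      left; auto. left; auto.
    + apply (Hlim 0 0 E). right; left; auto. right; left; auto.
    + apply (Hlim 0 0 E). right; right; auto. right; right; auto.
Qed.
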